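(* Let $\mathbf V$ be a set of unlabelled 1-graphs and let $\mathbf G_2(\mathbf V)$ be the set of unlabelled 2-graphs all of whose vertex graphs lie (up to isomorphism) in $\mathbf V$. Let $\overline{\mathbf G_2(\mathbf V)}=\{\Gamma'/\Theta:\ \Theta\subseteq\Gamma'\in\mathbf G_2(\mathbf V)\}$ be its contraction closure. Then the subalgebra $\langle\overline{\mathbf G_2(\mathbf V)}\rangle$ of the 2-graph bialgebra $\mathcal G$ generated by $\overline{\mathbf G_2(\mathbf V)}$ is a subbialgebra of $\mathcal G$.
   Context: A 1-graph is $(\mathcal V,\mathcal H,\nu,\iota)$: finite sets, $\nu:\mathcal H\to\mathcal V$, $\iota$ an involution of $\mathcal H$; isomorphisms are pairs of bijections intertwining $\nu$ and $\iota$. A 2-graph is $G=(\mathcal V,\mathcal H,\nu,\iota;\mathcal S,\mu,\sigma_1,\sigma_2)$: a 1-graph together with a finite set $\mathcal S$ of strand sections, $\mu:\mathcal S\to\mathcal H$, a fixed-point free involution $\sigma_1$ of $\mathcal S$ with $\nu\circ\mu\circ\sigma_1=\nu\circ\mu$, and an involution $\sigma_2$ of $\mathcal S$ with $\iota\circ\mu=\mu\circ\sigma_2$ such that $s$ is fixed by $\sigma_2$ iff $\mu(s)$ is fixed by $\iota$. The vertex graph of $v\in\mathcal V$ is the 1-graph $g_v=(\nu^{-1}(v),(\nu\circ\mu)^{-1}(v),\mu|,\sigma_1|)$. Edges are two-element orbits of $\iota$; edge strands are two-element orbits of $\sigma_2$; fixed points are external. A subgraph $H\subseteq G$ differs from $G$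 only in having a subset of the edges and the corresponding subset of edge strands (the removed ones becoming external). An external face of $H$ is a tuple $(s_1,\dots,s_{2n})$ of distinct strand sections with $s_{2i}=\sigma_1(s_{2i-1})$, $s_{2i+1}=\sigma_{2,H}(s_{2i})$, $s_1,s_{2n}$ fixed by $\sigma_{2,H}$. The contraction $G/H$ has vertices the connected components of $H$, half-edges and strand sections the external ones of $H$, $\nu$ mapping to the component, $\mu$ restricted, edges and edge strands those of $G$ not in $H$, and $\sigma_1$ pairing $s_1$ with $s_{2n}$ for each external face of $H$. Unlabelled 2-graphs are isomorphism classes (bijections on vertices, half-edges, strand sections intertwining all structure). The bialgebra $\mathcal G$ is the $\mathbb Q$-vector space with basis all unlabelled 2-graphs, product disjoint union, unit the empty 2-graph, coproduct $\Delta(\Gamma)=\sum_{\Theta\subseteq\Gamma}\Theta\otimes\Gamma/\Theta$ (sum over subgraphs) and counit $\epsilon(\Gamma)=1$ if $\Gamma$ has no edges and $0$ otherwise. *)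

(* Defs.v *)
From mathcomp Require Import all_boot all_order all_algebra.
Set Implicit Arguments. Unset Strict Implicit. Unset Printing Implicit Defensive.
Import GRing.Theory.
Local Open Scope ring_scope.

Record graph1 := Graph1 {
  nv1 : nat; nh1 : nat;
  nu1 : {ffun 'I_nh1 -> 'I_nv1};
  iota1 : {ffun 'I_nh1 -> 'I_nh1} }.

(* Labelled (raw) 2-graphs: vertices 'I_nv, half-edges 'I_nh,
   strand sections 'I_ns. *)
Record graph2 := Graph2 {
  nv : nat; nh : nat; ns : nat;
  g_nu : {ffun 'I_nh -> 'I_nv};
  g_iota : {ffun 'I_nh -> 'I_nh};
  g_mu : {ffun 'I_ns -> 'I_nh};
  g_s1 : {ffun 'I_ns -> 'I_ns};
  g_s2 : {ffun 'I_ns -> 'I_ns} }.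

Definition valid2 (G : graph2) : bool :=
  [&& [forall h, g_iota G (g_iota G h) == h],
      [forall s, g_s1 G (g_s1 G s) == s],
      [forall s, g_s1 G s != s],
      [forall s, g_nu G (g_mu G (g_s1 G s)) == g_nu G (g_mu G s)],
      [forall s, g_s2 G (g_s2 G s) == s],
      [forall s, g_iota G (g_mu G s) == g_mu G (g_s2 G s)] &
      [forall s, (g_s2 G s == s) == (g_iota G (g_mu G s) == g_mu G s)]].

(* Isomorphism of 2-graphs: bijections (injective maps between sets of
   the same size) on vertices, half-edges, strand sections intertwining
   nu, iota, mu, sigma_1, sigma_2. *)
Definition iso2 (G H : graph2) : bool :=
  [&& nv G == nv H, nh G == nh H, ns G == ns H &
   [exists fV : {ffun 'I_(nv G) -> 'I_(nv H)},
    exists fH : {ffun 'I_(nh G) -> 'I_(nh H)},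
    exists fS : {ffun 'I_(ns G) -> 'I_(ns H)},
    [&& injectiveb fV, injectiveb fH, injectiveb fS,
        [forall h, fV (g_nu G h) == g_nu H (fH h)],
        [forall h, fH (g_iota G h) == g_iota H (fH h)],
        [forall s, fH (g_mu G s) == g_mu H (fS s)],
        [forall s, fS (g_s1 G s) == g_s1 H (fS s)] &
        [forall s, fS (g_s2 G s) == g_s2 H (fS s)]]]].

(* The vertex graph has vertex set nu^-1(v), half-edge set
   (nu o mu)^-1(v), incidence mu and involution sigma_1 (restricted);
   the isomorphism is given as bijections from g1 onto these sets. *)
Definition vg_iso (G : graph2) (v : 'I_(nv G)) (g1 : graph1) : bool :=
  [exists fV : {ffun 'I_(nv1 g1) -> 'I_(nh G)},
   exists fH : {ffun 'I_(nh1 g1) -> 'I_(ns G)},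
   [&& injectiveb fV, injectiveb fH,
       [forall h, (g_nu G h == v) == (h \in codom fV)],
       [forall s, (g_nu G (g_mu G s) == v) == (s \in codom fH)],
       [forall x, g_mu G (fH x) == fV (nu1 g1 x)] &
       [forall x, g_s1 G (fH x) == fH (iota1 g1 x)]]].

Definition inG2 (V : graph1 -> Prop) (G : graph2) : Prop :=
  valid2 G /\ forall v : 'I_(nv G), exists g1, V g1 /\ @vg_iso G v g1.

(* A subgraph is given by its set of (internal) half-edges K,
   which must be a union of edges (iota-closed, no iota-fixed points);
   such K are in bijection with subsets of the set of edges. *)
Definition edgeset (G : graph2) (K : {set 'I_(nh G)}) : bool :=
  [forall h, (h \in K) ==> ((g_iota G h \in K) && (g_iota G h != h))].

Definition sub_iota (G : graph2) (K : {set 'I_(nh G)}) :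
  {ffun 'I_(nh G) -> 'I_(nh G)} :=
  [ffun h => if h \in K then g_iota G h else h].

Definition sub_s2 (G : graph2) (K : {set 'I_(nh G)}) :
  {ffun 'I_(ns G) -> 'I_(ns G)} :=
  [ffun s => if g_mu G s \in K then g_s2 G s else s].

Definition subg (G : graph2) (K : {set 'I_(nh G)}) : graph2 :=
  @Graph2 (nv G) (nh G) (ns G) (g_nu G) (sub_iota K) (g_mu G) (g_s1 G)
          (sub_s2 K).

Definition compRel (G : graph2) (K : {set 'I_(nh G)}) : rel 'I_(nv G) :=
  fun v w => [exists h, [&& h \in K, g_nu G h == v & g_nu G (g_iota G h) == w]].

(* connected components of the subgraph, represented by their roots *)
Definition compR (G : graph2) (K : {set 'I_(nh G)}) : {set 'I_(nv G)} :=
  [set fingraph.root (compRel K) v | v in [set: 'I_(nv G)]].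

Definition extH (G : graph2) (K : {set 'I_(nh G)}) : {set 'I_(nh G)} :=
  [set h | h \notin K].
Definition extS (G : graph2) (K : {set 'I_(nh G)}) : {set 'I_(ns G)} :=
  [set s | g_mu G s \notin K].

Lemma extS_extH (G : graph2) (K : {set 'I_(nh G)}) (s : 'I_(ns G)) :
  s \in extS K -> g_mu G s \in extH K.
Proof. by rewrite !inE. Qed.

Lemma root_compR (G : graph2) (K : {set 'I_(nh G)}) (v : 'I_(nv G)) :
  fingraph.root (compRel K) v \in compR K.
Proof. by apply: imset_f; rewrite inE. Qed.

(* For an external strand section s (= s_1 of an external face), the
   last element s_{2n} of the external face (s_1, ..., s_{2n}):
   s_2 = sigma_1 s_1, and s_{2i+2} = sigma_1 (sigma_2H s_{2i}) until a
   sigma_2H-fixed element is reached (at most ns steps). *)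
Definition faceend (G : graph2) (K : {set 'I_(nh G)}) (s : 'I_(ns G)) :
  'I_(ns G) :=
  iter (ns G)
    (fun x => if sub_s2 K x == x then x else g_s1 G (sub_s2 K x))
    (g_s1 G s).

Definition contr (G : graph2) (K : {set 'I_(nh G)}) : graph2 :=
  @Graph2 #|compR K| #|extH K| #|extS K|
    [ffun h => enum_rank_in (root_compR K (g_nu G (enum_val h)))
                            (fingraph.root (compRel K) (g_nu G (enum_val h)))]
    [ffun h => enum_rank_in (enum_valP h) (g_iota G (enum_val h))]
    [ffun s => enum_rank_in (extS_extH (enum_valP s)) (g_mu G (enum_val s))]
    [ffun s => enum_rank_in (enum_valP s) (faceend K (enum_val s))]
    [ffun s => enum_rank_in (enum_valP s) (g_s2 G (enum_val s))].

Definition sumf (a b c d : nat) (f : 'I_a -> 'I_b) (g : 'I_c -> 'I_d)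
  (x : 'I_(a + c)) : 'I_(b + d) :=
  match split x with
  | inl y => lshift d (f y)
  | inr y => rshift b (g y)
  end.

Definition dunion (G H : graph2) : graph2 :=
  @Graph2 (nv G + nv H) (nh G + nh H) (ns G + ns H)
    [ffun x => sumf (g_nu G) (g_nu H) x]
    [ffun x => sumf (g_iota G) (g_iota H) x]
    [ffun x => sumf (g_mu G) (g_mu H) x]
    [ffun x => sumf (g_s1 G) (g_s1 H) x]
    [ffun x => sumf (g_s2 G) (g_s2 H) x].

Definition empty2 : graph2 :=
  @Graph2 0 0 0 [ffun x => x] [ffun x => x] [ffun x => x] [ffun x => x]
          [ffun x => x].

(* An element is represented by a formal Q-linear
   combination of labelled 2-graphs; two representations denote the same
   vector when their coefficients agree on every isomorphism class
   (i.e. on every basis element = unlabelled 2-graph). *)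
Definition vec := seq (rat * graph2).
Definition vec2 := seq (rat * (graph2 * graph2)).   (* elements of G (x) G *)

Definition valid_vec (v : vec) : bool := all (fun p => valid2 p.2) v.

Definition coef (v : vec) (g : graph2) : rat :=
  \sum_(p <- v | iso2 p.2 g) p.1.
Definition coef2 (t : vec2) (g h : graph2) : rat :=
  \sum_(p <- t | iso2 p.2.1 g && iso2 p.2.2 h) p.1.

Definition veq (u v : vec) : Prop := forall g, coef u g = coef v g.
Definition veq2 (t t' : vec2) : Prop := forall g h, coef2 t g h = coef2 t' g h.

Definition vzero : vec := [::].
Definition vunit : vec := [:: (1, empty2)].
Definition vbasis (g : graph2) : vec := [:: (1, g)].
Definition vadd (u v : vec) : vec := u ++ v.
Definition vscale (c : rat) (u : vec) : vec := [seq (c * p.1, p.2) | p <- u].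
Definition vmul (u v : vec) : vec :=
  [seq (p.1 * q.1, dunion p.2 q.2) | p <- u, q <- v].

Definition tens (u v : vec) : vec2 :=
  [seq (p.1 * q.1, (p.2, q.2)) | p <- u, q <- v].

Definition cop1 (G : graph2) : vec2 :=
  [seq (1, (subg K, contr K)) | K <- enum [set K : {set 'I_(nh G)} | edgeset K]].
Definition Delta (v : vec) : vec2 :=
  flatten [seq [seq (p.1 * q.1, q.2) | q <- cop1 p.2] | p <- v].

(* Subsets of G (predicates on representations, required to respect veq). *)
Definition is_subalgebra (A : vec -> Prop) : Prop :=
  (forall u, A u -> valid_vec u) /\
  (forall u v, A u -> valid_vec v -> veq u v -> A v) /\
  A vzero /\ A vunit /\
  (forall u v, A u -> A v -> A (vadd u v)) /\
  (forall c u, A u -> A (vscale c u)) /\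
  (forall u v, A u -> A v -> A (vmul u v)).

Definition gen_subalg (S : graph2 -> Prop) (v : vec) : Prop :=
  valid_vec v /\
  forall P : vec -> Prop, is_subalgebra P ->
    (forall g, valid2 g -> S g -> P (vbasis g)) -> P v.

Fixpoint Allp (T : Type) (P : T -> Prop) (s : seq T) : Prop :=
  match s with [::] => True | x :: s' => P x /\ Allp P s' end.

Definition in_tensor (A : vec -> Prop) (t : vec2) : Prop :=
  exists ab : seq (rat * (vec * vec)),
    Allp (fun p => A p.2.1 /\ A p.2.2) ab /\
    veq2 t (flatten [seq [seq (p.1 * q.1, q.2) | q <- tens p.2.1 p.2.2] | p <- ab]).

Definition is_subbialgebra (A : vec -> Prop) : Prop :=
  is_subalgebra A /\ forall v, A v -> in_tensor A (Delta v).

(* contraction closure of G_2(V) (as a set of unlabelled 2-graphs: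
   membership up to isomorphism) *)
Definition G2bar (V : graph1 -> Prop) (g : graph2) : Prop :=
  exists (G' : graph2) (K : {set 'I_(nh G')}),
    inG2 V G' /\ edgeset K /\ iso2 (contr K) g.

(* Main.v *)
Require Import Defs.
From mathcomp Require Import all_boot all_order all_algebra zify.
Set Implicit Arguments. Unset Strict Implicit. Unset Printing Implicit Defensive.

Section FE.
Variable T : finType.
Variables f g : T -> T.
Hypothesis fK : involutive f.
Hypothesis fF : forall x, f x != x.
Hypothesis gK : involutive g.

Definition phiF x := if g x == x then x else f (g x).
Definition fend n s := iter n phiF (f s).
Definition rr := [rel x y | (y == f x) || (y == g x)].

Definition h x := f (g x).

Lemma h_inj : injective h.
Proof. by move=> x y /(inv_inj fK) /(inv_inj gK). Qed.

Lemma iter_inj k : injective (iter k h).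
Proof. elim: k => //= k IH x y /h_inj; exact: IH. Qed.

Lemma hkgk' k x : iter k h (g (iter k h x)) = g x.
Proof.
elim: k => // k IH; rewrite iterSr iterS /h gK fK; exact: IH.
Qed.

Lemma rr_sym : connect_sym rr.
Proof.
apply: sym_connect_sym => x y /=.
apply/orP/orP => -[/eqP->|/eqP->]; by [left; rewrite fK | right; rewrite gK].
Qed.

Lemma connect_h x k : connect rr x (iter k h x).
Proof.
elim: k => [|k IH]; first exact: connect0.
apply: (connect_trans IH).
rewrite iterS; set y := iter k h x.
apply: (@connect_trans _ _ (g y)); apply: connect1 => /=.
  by rewrite eqxx orbT.
by rewrite /h eqxx.
Qed.

Variable s : T.
Hypothesis gs : g s = s.

Local Notation c := (order h s).

Lemma iter_c : iter c h s = s.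
Proof. exact: (iter_order h_inj). Qed.

Lemma iter_lt_c i j : i < c -> j < c -> iter i h s = iter j h s -> i = j.
Proof.
move=> ic jc e.
by rewrite -(findex_iter ic) -(findex_iter jc) e.
Qed.

Lemma iter_cK i : iter (c + i) h s = iter i h s.
Proof. by rewrite addnC iterD iter_c. Qed.

Lemma fixP k : (g (iter k h s) == iter k h s) = (iter (k + k) h s == s).
Proof.
apply/eqP/eqP => [e | e].
  by rewrite iterD -{1}e hkgk' gs.
apply: (@iter_inj k); by rewrite hkgk' gs -iterD e.
Qed.

Lemma c_gt0 : 0 < c. Proof. exact: order_gt0. Qed.

Lemma c_even : ~~ odd c.
Proof.
apply/negP => oc.
have cE : c = (c./2).*2.+1 by rewrite -[LHS]odd_double_half oc.
set j := c./2 in cE.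
set y := iter j.+1 h s.
have fy : f y = h (g y) by rewrite /h gK.
have e1 : iter j.+1 h (f y) = iter j.+1 h y.
  rewrite fy -iterSr iterS hkgk' gs /y -iterD.
  have -> : j.+1 + j.+1 = c + 1 by rewrite cE -addnn addnS addn1.
  by rewrite iter_cK.
by move: (fF y); rewrite (iter_inj e1) eqxx.
Qed.

Local Notation j := (c./2).
Lemma cE : c = j + j.
Proof. by rewrite addnn -[in LHS](odd_double_half c) (negbTE c_even). Qed.

Lemma j_gt0 : 0 < j.
Proof. move: c_gt0 cE; set k := (c./2); lia. Qed.

Lemma j_lt_c : j < c.
Proof. move: j_gt0 cE; set k := (c./2); lia. Qed.

Lemma notfix k : 0 < k < j -> g (iter k h s) != iter k h s.
Proof.
case/andP=> k0 kj; rewrite fixP; apply/negP => /eqP e.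
have : k + k = 0.
  apply: iter_lt_c; [ | exact: c_gt0 | exact: e].
  by move: (cE) kj; set k' := (c./2); lia.
by move/eqP; rewrite addn_eq0 andbb => /eqP k00; move: k0; rewrite k00.
Qed.

Lemma tfix : g (iter j h s) = iter j h s.
Proof. by apply/eqP; rewrite fixP -cE iter_c. Qed.

Lemma iter_phi m : iter m phiF (f s) = iter (minn m.+1 j) h s.
Proof.
elim: m => [|m IH].
  by rewrite /= (minn_idPl j_gt0) /= /h gs.
rewrite iterS IH.
case: (ltnP m.+1 j) => Hm.
  have -> : minn m.+2 j = m.+2 by apply/minn_idPl.
  rewrite /phiF.
  by rewrite (negbTE (notfix _)) ?Hm.
have -> : minn m.+2 j = j by apply/minn_idPr; exact: leqW.
by rewrite /phiF tfix eqxx.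
Qed.

Lemma c_le_card : c <= #|T|.
Proof. by rewrite -size_orbit -(card_uniqP (orbit_uniq h s)) max_card. Qed.

Lemma fend_eq n : #|T| <= n -> fend n s = iter j h s.
Proof.
move=> Hn; rewrite /fend iter_phi (minn_idPr _) //.
apply: leq_trans (ltnW j_lt_c) _; apply: leq_trans c_le_card _; exact: leqW.
Qed.

Lemma fend_spec n : #|T| <= n ->
  [/\ g (fend n s) = fend n s, fend n s != s & connect rr s (fend n s)].
Proof.
move=> Hn; rewrite fend_eq //; split; first exact: tfix.
  apply/eqP => e.
  have := @iter_lt_c j 0 j_lt_c c_gt0 e.
  by move=> j0; move: j_gt0; rewrite j0.
exact: connect_h.
Qed.

Lemma closed_orbit : closed rr (fconnect h s).
Proof.
apply: intro_closed; first exact: rr_sym.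
move=> x y /orP [] /eqP -> Hx.
- have := iter_findex Hx; set k := findex h s x => xk.
  have kc : k < c by apply: findex_max.
  have gx : g x = iter (c - k) h s.
    apply: (@iter_inj k); rewrite -{1}xk hkgk' gs -iterD subnKC ?iter_c //.
    exact: ltnW.
  have -> : f x = h (g x) by rewrite /h gK.
  by rewrite gx -iterS; apply: fconnect_iter.
- have := iter_findex Hx; set k := findex h s x => xk.
  have kc : k < c by apply: findex_max.
  have gx : g x = iter (c - k) h s.
    apply: (@iter_inj k); rewrite -{1}xk hkgk' gs -iterD subnKC ?iter_c //.
    exact: ltnW.
  by rewrite gx; apply: fconnect_iter.
Qed.

Lemma fend_uniq n t : #|T| <= n -> g t = t -> t != s -> connect rr s t ->
  t = fend n s.
Proof.
move=> Hn gt ts cst.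
have : t \in fconnect h s.
  by rewrite -(closed_connect closed_orbit cst) inE; exact: connect0.
rewrite inE => Ht.
have := iter_findex Ht; set k := findex h s t => tk.
have kc : k < c by apply: findex_max.
rewrite fend_eq // -tk.
have /eqP e2 : iter (k + k) h s == s by rewrite -fixP tk gt.
case: (ltnP (k + k) c) => Hkk.
  have k0 : k + k = 0 by apply: iter_lt_c; [exact: Hkk | exact: c_gt0 | exact: e2].
  have : k = 0 by lia.
  by move=> k00; move: ts; rewrite -tk k00 eqxx.
have e3 : iter (k + k - c) h s = s.
  by rewrite -iter_cK (subnKC Hkk) e2.
have : k + k - c = 0 by apply: iter_lt_c; [lia | exact: c_gt0 | exact: e3].
by move: cE => ce; move=> kk; congr iter; lia.
Qed.

End FE.

Section Valid.
Variable G : graph2.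
Hypothesis vG : valid2 G.

Let vv := vG.
Lemma v_iotaK : involutive (g_iota G).
Proof. by move: vv => /andP[/forallP H _] x; apply/eqP. Qed.
Lemma v_s1K : involutive (g_s1 G).
Proof. by move: vv => /andP[_ /andP[/forallP H _]] x; apply/eqP. Qed.
Lemma v_s1F s : g_s1 G s != s.
Proof. by move: vv => /andP[_ /andP[_ /andP[/forallP H _]]]. Qed.
Lemma v_s1nu s : g_nu G (g_mu G (g_s1 G s)) = g_nu G (g_mu G s).
Proof. by move: vv => /andP[_ /andP[_ /andP[_ /andP[/forallP H _]]]]; apply/eqP. Qed.
Lemma v_s2K : involutive (g_s2 G).
Proof. by move: vv => /andP[_ /andP[_ /andP[_ /andP[_ /andP[/forallP H _]]]]] x; apply/eqP. Qed.
Lemma v_iotamu s : g_iota G (g_mu G s) = g_mu G (g_s2 G s).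
Proof. by move: vv => /andP[_ /andP[_ /andP[_ /andP[_ /andP[_ /andP[/forallP H _]]]]]]; apply/eqP. Qed.
Lemma v_s2fix s : (g_s2 G s == s) = (g_iota G (g_mu G s) == g_mu G s).
Proof. by move: vv => /andP[_ /andP[_ /andP[_ /andP[_ /andP[_ /andP[_ /forallP H]]]]]]; by move: (H s) => /eqP. Qed.
End Valid.

Lemma validI G :
  involutive (g_iota G) -> involutive (g_s1 G) -> (forall s, g_s1 G s != s) ->
  (forall s, g_nu G (g_mu G (g_s1 G s)) = g_nu G (g_mu G s)) ->
  involutive (g_s2 G) -> (forall s, g_iota G (g_mu G s) = g_mu G (g_s2 G s)) ->
  (forall s, (g_s2 G s == s) = (g_iota G (g_mu G s) == g_mu G s)) -> valid2 G.
Proof.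
move=> H1 H2 H3 H4 H5 H6 H7.
by rewrite /valid2; repeat (apply/andP; split); apply/forallP => x //; apply/eqP.
Qed.

Record isoM (G H : graph2) := IsoM {
  iV : 'I_(nv G) -> 'I_(nv H);
  iH : 'I_(nh G) -> 'I_(nh H);
  iS : 'I_(ns G) -> 'I_(ns H);
  iV_bij : bijective iV;
  iH_bij : bijective iH;
  iS_bij : bijective iS;
  i_nu : forall h, iV (g_nu G h) = g_nu H (iH h);
  i_iota : forall h, iH (g_iota G h) = g_iota H (iH h);
  i_mu : forall s, iH (g_mu G s) = g_mu H (iS s);
  i_s1 : forall s, iS (g_s1 G s) = g_s1 H (iS s);
  i_s2 : forall s, iS (g_s2 G s) = g_s2 H (iS s) }.

Definition isoP G H := inhabited (isoM G H).

Lemma isoP_refl G : isoP G G.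
Proof.
by constructor; apply: (@IsoM G G id id id); try exact: inv_bij.
Qed.

Lemma isoP_sym G H : isoP G H -> isoP H G.
Proof.
case=> -[fV fH fS [gV fgV gfV] [gH fgH gfH] [gS fgS gfS] Hnu Hio Hmu Hs1 Hs2].
constructor; apply: (@IsoM H G gV gH gS).
- by exists fV.
- by exists fH.
- by exists fS.
- by move=> h; apply: (can_inj fgV); rewrite Hnu !gfH.
- by move=> h; apply: (can_inj fgH); rewrite Hio !gfH.
- by move=> s; apply: (can_inj fgH); rewrite Hmu !gfS gfH.
- by move=> s; apply: (can_inj fgS); rewrite Hs1 !gfS.
- by move=> s; apply: (can_inj fgS); rewrite Hs2 !gfS.
Qed.

Lemma isoP_trans G H I : isoP G H -> isoP H I -> isoP G I.
Proof.
case=> -[fV fH fS bV bH bS Hnu Hio Hmu Hs1 Hs2].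
case=> -[fV' fH' fS' bV' bH' bS' Hnu' Hio' Hmu' Hs1' Hs2'].
constructor; apply: (@IsoM G I (fV' \o fV) (fH' \o fH) (fS' \o fS)).
- exact: bij_comp.
- exact: bij_comp.
- exact: bij_comp.
- by move=> h /=; rewrite Hnu Hnu'.
- by move=> h /=; rewrite Hio Hio'.
- by move=> h /=; rewrite Hmu Hmu'.
- by move=> h /=; rewrite Hs1 Hs1'.
- by move=> h /=; rewrite Hs2 Hs2'.
Qed.

Lemma iso2P G H : reflect (isoP G H) (iso2 G H).
Proof.
apply: (iffP idP).
  case/and4P => /eqP eV /eqP eH /eqP eS.
  case/existsP => fV /existsP [fH /existsP [fS]].
  case/and5P => /injectiveP iV' /injectiveP iH' /injectiveP iS' /forallP Hnu.
  case/and4P => /forallP Hio /forallP Hmu /forallP Hs1 /forallP Hs2.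
  constructor; apply: (@IsoM G H fV fH fS).
  - by apply: inj_card_bij => //; rewrite !card_ord eV.
  - by apply: inj_card_bij => //; rewrite !card_ord eH.
  - by apply: inj_card_bij => //; rewrite !card_ord eS.
  - by move=> h; apply/eqP.
  - by move=> h; apply/eqP.
  - by move=> h; apply/eqP.
  - by move=> h; apply/eqP.
  - by move=> h; apply/eqP.
case=> -[fV fH fS bV bH bS Hnu Hio Hmu Hs1 Hs2].
apply/and4P; split.
- by have := bij_eq_card bV; rewrite !card_ord => ->.
- by have := bij_eq_card bH; rewrite !card_ord => ->.
- by have := bij_eq_card bS; rewrite !card_ord => ->.
apply/existsP; exists [ffun x => fV x].
apply/existsP; exists [ffun x => fH x].
apply/existsP; exists [ffun x => fS x].
apply/and5P; split.
- by apply/injectiveP => x y; rewrite !ffunE; apply: bij_inj.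
- by apply/injectiveP => x y; rewrite !ffunE; apply: bij_inj.
- by apply/injectiveP => x y; rewrite !ffunE; apply: bij_inj.
- by apply/forallP => x; rewrite !ffunE Hnu.
apply/and4P; split.
- by apply/forallP => x; rewrite !ffunE Hio.
- by apply/forallP => x; rewrite !ffunE Hmu.
- by apply/forallP => x; rewrite !ffunE Hs1.
- by apply/forallP => x; rewrite !ffunE Hs2.
Qed.

Lemma iso2_refl G : iso2 G G. Proof. apply/iso2P; exact: isoP_refl. Qed.
Lemma iso2_sym G H : iso2 G H = iso2 H G.
Proof. by apply/iso2P/iso2P; apply: isoP_sym. Qed.
Lemma iso2_trans G H I : iso2 G H -> iso2 H I -> iso2 G I.
Proof. move=> /iso2P a /iso2P b; apply/iso2P; exact: isoP_trans a b. Qed.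

Lemma iso2_valid G H : iso2 G H -> valid2 G -> valid2 H.
Proof.
case/iso2P => -[fV fH fS [gV fgV gfV] [gH fgH gfH] [gS fgS gfS] Hnu Hio Hmu Hs1 Hs2] vG.
have eH h : g_iota H h = fH (g_iota G (gH h)) by rewrite Hio gfH.
have eS1 s : g_s1 H s = fS (g_s1 G (gS s)) by rewrite Hs1 gfS.
have eS2 s : g_s2 H s = fS (g_s2 G (gS s)) by rewrite Hs2 gfS.
have eMu s : g_mu H s = fH (g_mu G (gS s)) by rewrite Hmu gfS.
have eNu h : g_nu H h = fV (g_nu G (gH h)) by rewrite Hnu gfH.
apply: validI.
- by move=> h; rewrite !eH fgH v_iotaK ?gfH.
- by move=> s; rewrite !eS1 fgS v_s1K ?gfS.
- by move=> s; rewrite eS1 -{2}(gfS s) (inj_eq (can_inj fgS)) v_s1F.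
- by move=> s; rewrite !eMu !eNu eS1 !fgH fgS v_s1nu.
- by move=> s; rewrite !eS2 fgS v_s2K ?gfS.
- by move=> s; rewrite eMu eH fgH v_iotamu // eMu eS2 fgS.
- move=> s; rewrite eS2 -{2}(gfS s) (inj_eq (can_inj fgS)) v_s2fix //.
  by rewrite eMu eH fgH (inj_eq (can_inj fgH)).
Qed.

Lemma connect_map (T1 T2 : finType) (e1 : rel T1) (e2 : rel T2) (m : T1 -> T2) :
  (forall x y, e1 x y -> connect e2 (m x) (m y)) ->
  forall x y, connect e1 x y -> connect e2 (m x) (m y).
Proof.
move=> H x y /connectP [p Hp ->]; elim: p x Hp => [|z p IH] x /=.
  by move=> _; exact: connect0.
case/andP => exz Hp; exact: connect_trans (H _ _ exz) (IH _ Hp).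
Qed.

Lemma connect_lift (T1 T2 : finType) (e1 : rel T1) (e2 : rel T2) (m : T1 -> T2) :
  (forall a b, m a = m b -> connect e1 a b) ->
  (forall a b, e2 (m a) (m b) -> connect e1 a b) ->
  (forall y, exists a, m a = y) ->
  forall a b, connect e2 (m a) (m b) -> connect e1 a b.
Proof.
move=> Hk He Hs a b /connectP [p Hp Hl]; elim: p a Hp Hl => [|z p IH] a /=.
  by move=> _ Hl; apply: Hk.
case/andP => ez Hp Hl; have [a' Ha'] := Hs z; subst z.
exact: connect_trans (He _ _ ez) (IH _ Hp Hl).
Qed.

Lemma in_codom_enum (T : finType) (A : {set T}) x :
  (x \in codom (@enum_val T (mem A))) = (x \in A).
Proof.
apply/codomP/idP => [[i ->]|xA]; first exact: enum_valP.
by exists (enum_rank_in xA x); rewrite enum_rankK_in.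
Qed.

Lemma enum_rank_in_irr (T : finType) (A : {set T}) x0 x1 (x0A : x0 \in A)
  (x1A : x1 \in A) x : x \in A -> enum_rank_in x0A x = enum_rank_in x1A x.
Proof. by move=> xA; apply: enum_val_inj; rewrite !enum_rankK_in. Qed.

Record isContr (C G : graph2) (K : {set 'I_(nh G)}) := IsC {
  qV : 'I_(nv G) -> 'I_(nv C);
  eH : 'I_(nh C) -> 'I_(nh G);
  eS : 'I_(ns C) -> 'I_(ns G);
  qV_surj : forall x, exists v, qV v = x;
  qV_ker : forall v w, (qV v == qV w) = connect (compRel K) v w;
  eH_inj : injective eH;
  eS_inj : injective eS;
  eH_im : forall h, (h \in codom eH) = (h \notin K);
  eS_im : forall s, (s \in codom eS) = (g_mu G s \notin K);
  c_nu : forall h, g_nu C h = qV (g_nu G (eH h));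
  c_iota : forall h, eH (g_iota C h) = g_iota G (eH h);
  c_mu : forall s, eH (g_mu C s) = g_mu G (eS s);
  c_s1 : forall s, eS (g_s1 C s) = faceend K (eS s);
  c_s2 : forall s, eS (g_s2 C s) = g_s2 G (eS s) }.


Section Contr.
Variable G : graph2.
Hypothesis vG : valid2 G.
Variable K : {set 'I_(nh G)}.
Hypothesis eK : edgeset K.

Lemma eK_in h : h \in K -> g_iota G h \in K.
Proof. by move: eK => /forallP /(_ h) /implyP H /H /andP[]. Qed.
Lemma eK_neq h : h \in K -> g_iota G h != h.
Proof. by move: eK => /forallP /(_ h) /implyP H /H /andP[]. Qed.
Lemma iotaK_in h : (g_iota G h \in K) = (h \in K).
Proof.
apply/idP/idP; last exact: eK_in.
by move/eK_in; rewrite v_iotaK.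
Qed.

Lemma sub_s2E s : sub_s2 K s = if g_mu G s \in K then g_s2 G s else s.
Proof. by rewrite ffunE. Qed.
Lemma sub_iotaE h : sub_iota K h = if h \in K then g_iota G h else h.
Proof. by rewrite ffunE. Qed.

Lemma mu_s2_in s : (g_mu G (g_s2 G s) \in K) = (g_mu G s \in K).
Proof. by rewrite -v_iotamu // iotaK_in. Qed.

Lemma sub_s2K : involutive (sub_s2 K).
Proof.
move=> s; rewrite [sub_s2 K s]sub_s2E; case: ifP => Hs; rewrite sub_s2E ?Hs //.
by rewrite mu_s2_in Hs v_s2K.
Qed.

Lemma fixext s : (sub_s2 K s == s) = (g_mu G s \notin K).
Proof.
rewrite sub_s2E; case: ifP => Hs; last by rewrite eqxx.
rewrite v_s2fix //; apply/negbTE; exact: eK_neq.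
Qed.

Lemma compRel_sym : symmetric (compRel K).
Proof.
suff H : forall v w, compRel K v w -> compRel K w v.
  by move=> v w; apply/idP/idP; apply: H.
move=> v w /existsP [h /and3P [hK /eqP hv /eqP hw]].
apply/existsP; exists (g_iota G h); rewrite eK_in // v_iotaK // hv hw.
by rewrite !eqxx.
Qed.

Lemma compRel_csym : connect_sym (compRel K).
Proof. exact: sym_connect_sym compRel_sym. Qed.

Local Notation rK := (rr (g_s1 G) (sub_s2 K)).

Lemma faceendE s : faceend K s = fend (g_s1 G) (sub_s2 K) (ns G) s.
Proof. by []. Qed.

Let card_ns : #|'I_(ns G)| <= ns G. Proof. by rewrite card_ord. Qed.

Section Face.
Variable s : 'I_(ns G).
Hypothesis sK : g_mu G s \notin K.
Let gs : sub_s2 K s = s. Proof. by apply/eqP; rewrite fixext. Qed.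

Lemma faceend_spec :
  [/\ g_mu G (faceend K s) \notin K, faceend K s != s & connect rK s (faceend K s)].
Proof.
have [H1 H2 H3] := fend_spec (v_s1K vG) (v_s1F vG) sub_s2K gs card_ns.
by split => //; rewrite -fixext faceendE H1.
Qed.

Lemma faceend_uniq t : g_mu G t \notin K -> t != s -> connect rK s t ->
  t = faceend K s.
Proof.
move=> tK ts cst; apply: (fend_uniq (v_s1K vG) (v_s1F vG) sub_s2K gs card_ns) => //.
by apply/eqP; rewrite fixext.
Qed.

End Face.

Lemma faceendK s : g_mu G s \notin K -> faceend K (faceend K s) = s.
Proof.
move=> sK; have [H1 H2 H3] := faceend_spec sK.
symmetry; apply: (faceend_uniq H1) => //; first by rewrite eq_sym.
by rewrite (rr_sym (v_s1K vG) sub_s2K).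
Qed.

Lemma nu_conn x y : connect rK x y ->
  connect (compRel K) (g_nu G (g_mu G x)) (g_nu G (g_mu G y)).
Proof.
apply: (@connect_map _ _ _ _ (fun x => g_nu G (g_mu G x))) => {}x {}y /orP [] /eqP ->.
  by rewrite v_s1nu //; exact: connect0.
rewrite sub_s2E; case: ifP => Hx; last exact: connect0.
apply: connect1; apply/existsP; exists (g_mu G x).
by rewrite Hx v_iotamu // !eqxx.
Qed.

Lemma ext_enum_H (h : 'I_#|extH K|) : enum_val h \notin K.
Proof. by have := enum_valP h; rewrite inE. Qed.
Lemma ext_enum_S (s : 'I_#|extS K|) : g_mu G (enum_val s) \notin K.
Proof. by have := enum_valP s; rewrite inE. Qed.

Definition qVc (v : 'I_(nv G)) : 'I_(#|compR K|) :=
  enum_rank_in (root_compR K v) (fingraph.root (compRel K) v).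

Lemma contr_isContr : isContr (contr K) K.
Proof.
apply: (@IsC (contr K) G K qVc enum_val enum_val).
- move=> x; have := enum_valP x; case/imsetP => v _ e.
  by exists v; apply: enum_val_inj; rewrite /qVc enum_rankK_in ?root_compR // e.
- move=> v w; rewrite /qVc.
  apply/eqP/idP => [e|c].
    have := congr1 enum_val e; rewrite !enum_rankK_in ?root_compR //.
    by move/eqP; rewrite root_connect //; exact: compRel_csym.
  apply: enum_val_inj; rewrite !enum_rankK_in ?root_compR //.
  by apply/eqP; rewrite root_connect //; exact: compRel_csym.
- exact: enum_val_inj.
- exact: enum_val_inj.
- by move=> h; rewrite in_codom_enum inE.
- by move=> s; rewrite in_codom_enum inE.
- move=> h; rewrite /= ffunE /qVc; apply: enum_rank_in_irr; exact: root_compR.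
- move=> h; rewrite /= ffunE enum_rankK_in // inE iotaK_in.
  by have := enum_valP h; rewrite inE.
- move=> s; rewrite /= ffunE enum_rankK_in // inE.
  by have := enum_valP s; rewrite inE.
- move=> s; rewrite /= ffunE enum_rankK_in // inE.
  have [H1 _ _] := faceend_spec (ext_enum_S s); exact: H1.
- move=> s; rewrite /= ffunE enum_rankK_in // inE mu_s2_in.
  by have := enum_valP s; rewrite inE.
Qed.
End Contr.

Lemma eH_ext C G (K : {set 'I_(nh G)}) (X : isContr C K) h : eH X h \notin K.
Proof. by rewrite -(eH_im X) codom_f. Qed.
Lemma eS_ext C G (K : {set 'I_(nh G)}) (X : isContr C K) s : g_mu G (eS X s) \notin K.
Proof. by rewrite -(eS_im X) codom_f. Qed.

Lemma contr_maps C C' G (K : {set 'I_(nh G)}) (X : isContr C K) (Y : isContr C' K) :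
  exists (fV : 'I_(nv C) -> 'I_(nv C')) (fH : 'I_(nh C) -> 'I_(nh C'))
         (fS : 'I_(ns C) -> 'I_(ns C')),
  [/\ forall v, fV (qV X v) = qV Y v, forall h, eH Y (fH h) = eH X h
    & forall s, eS Y (fS s) = eS X s].
Proof.
have /fin_all_exists [fV HV] : forall x, exists y, forall v, qV X v = x -> qV Y v = y.
  move=> x; have [v0 e0] := qV_surj X x; exists (qV Y v0) => v ev.
  by apply/eqP; rewrite qV_ker -(qV_ker X) ev e0.
have /fin_all_exists [fH HH] : forall h, exists h', eH Y h' = eH X h.
  move=> h; have : eH X h \in codom (eH Y) by rewrite eH_im eH_ext.
  by case/codomP => h' ->; exists h'.
have /fin_all_exists [fS HS] : forall s, exists s', eS Y s' = eS X s.
  move=> s; have : eS X s \in codom (eS Y) by rewrite eS_im eS_ext.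
  by case/codomP => s' ->; exists s'.
by exists fV, fH, fS; split => // v; apply/esym/HV.
Qed.

Lemma contr_uniq C C' G (K : {set 'I_(nh G)}) (X : isContr C K) (Y : isContr C' K) :
  isoP C C'.
Proof.
have [fV [fH [fS [HV HH HS]]]] := contr_maps X Y.
have [gV [gH [gS [GV GH GS]]]] := contr_maps Y X.
constructor; apply: (@IsoM C C' fV fH fS).
- exists gV => x.
    by have [v <-] := qV_surj X x; rewrite HV GV.
  by have [v <-] := qV_surj Y x; rewrite GV HV.
- by exists gH => x; [apply: (@eH_inj _ _ _ X (gH (fH x)) x) | apply: (@eH_inj _ _ _ Y)]; rewrite ?GH ?HH.
- by exists gS => x; [apply: (@eS_inj _ _ _ X (gS (fS x)) x) | apply: (@eS_inj _ _ _ Y)]; rewrite ?GS ?HS.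
- by move=> h; rewrite (c_nu X) (c_nu Y) HV HH.
- by move=> h; apply: (@eH_inj _ _ _ Y); rewrite HH (c_iota X) (c_iota Y) HH.
- by move=> s; apply: (@eH_inj _ _ _ Y); rewrite HH (c_mu X) (c_mu Y) HS.
- by move=> s; apply: (@eS_inj _ _ _ Y); rewrite HS (c_s1 X) (c_s1 Y) HS.
- by move=> s; apply: (@eS_inj _ _ _ Y); rewrite HS (c_s2 X) (c_s2 Y) HS.
Qed.

Section CValid.
Variable G : graph2.
Hypothesis vG : valid2 G.
Variable K : {set 'I_(nh G)}.
Hypothesis eK : edgeset K.
Variable C : graph2.
Variable X : isContr C K.

Lemma contr_valid : valid2 C.
Proof.
apply: validI.
- by move=> h; apply: (@eH_inj _ _ _ X); rewrite !(c_iota X) v_iotaK.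
- by move=> s; apply: (@eS_inj _ _ _ X); rewrite !(c_s1 X) faceendK // eS_ext.
- move=> s; rewrite -(inj_eq (@eS_inj _ _ _ X)) (c_s1 X).
  by have [_ H _] := faceend_spec vG eK (eS_ext X s).
- move=> s; rewrite !(c_nu X) !(c_mu X) (c_s1 X); apply/eqP; rewrite (qV_ker X).
  have [_ _ H] := faceend_spec vG eK (eS_ext X s).
  rewrite compRel_csym //; exact: nu_conn H.
- by move=> s; apply: (@eS_inj _ _ _ X); rewrite !(c_s2 X) v_s2K.
- by move=> s; apply: (@eH_inj _ _ _ X); rewrite (c_iota X) !(c_mu X) (c_s2 X) v_iotamu.
- move=> s; rewrite -(inj_eq (@eS_inj _ _ _ X)) -(inj_eq (@eH_inj _ _ _ X)) (c_s2 X) v_s2fix //.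
  by rewrite (c_iota X) (c_mu X).
Qed.
End CValid.

Lemma rr_sub G (K M : {set 'I_(nh G)}) : K \subset M ->
  forall x y, connect (rr (g_s1 G) (sub_s2 K)) x y ->
              connect (rr (g_s1 G) (sub_s2 M)) x y.
Proof.
move=> KM; apply: connect_sub => x y /orP [] /eqP ->.
  by apply: connect1; rewrite /= eqxx.
rewrite sub_s2E; case: ifP => Hx; last exact: connect0.
by apply: connect1; rewrite /= sub_s2E (subsetP KM _ Hx) eqxx orbT.
Qed.

Lemma compRel_sub G (K M : {set 'I_(nh G)}) : K \subset M ->
  forall v w, connect (compRel K) v w -> connect (compRel M) v w.
Proof.
move=> KM; apply: connect_sub => v w /existsP [h /and3P [hK hv hw]].
by apply: connect1; apply/existsP; exists h; rewrite (subsetP KM _ hK) hv hw.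
Qed.

Section Comp.
Variable G : graph2.
Hypothesis vG : valid2 G.
Variable K : {set 'I_(nh G)}.
Hypothesis eK : edgeset K.
Variable C : graph2.
Variable X : isContr C K.
Variable K' : {set 'I_(nh C)}.
Hypothesis eK' : edgeset K'.
Variable D : graph2.
Variable Y : isContr D K'.

Let vC : valid2 C := contr_valid vG eK X.

Definition Mset := K :|: eH X @: K'.
Local Notation M := Mset.

Let eHX_inj := @eH_inj _ _ _ X.
Let eSX_inj := @eS_inj _ _ _ X.
Let eHY_inj := @eH_inj _ _ _ Y.
Let eSY_inj := @eS_inj _ _ _ Y.

Lemma inM_eH y : (eH X y \in M) = (y \in K').
Proof. by rewrite inE mem_imset // (negbTE (eH_ext X y)). Qed.

Lemma KM : K \subset M.
Proof. by apply/subsetP => h hK; rewrite inE hK. Qed.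

Lemma comp_edgeset : edgeset M.
Proof.
apply/forallP => h; apply/implyP; rewrite inE => /orP [hK|].
  by rewrite inE (eK_in eK) // (eK_neq eK).
case/imsetP => h' h'K ->.
rewrite -(c_iota X) inM_eH (eK_in eK') //=.
by rewrite (inj_eq eHX_inj) (eK_neq eK').
Qed.

Lemma comp_face x : g_mu C x \notin K' ->
  eS X (faceend K' x) = faceend M (eS X x).
Proof.
move=> xK.
have bM : g_mu G (eS X x) \notin M.
  by rewrite -(c_mu X) inM_eH.
have [H1 H2 H3] := faceend_spec vC eK' xK.
apply: (faceend_uniq vG comp_edgeset bM).
- by rewrite -(c_mu X) inM_eH.
- by rewrite (inj_eq eSX_inj).
apply: (@connect_map _ _ _ _ (eS X)) H3 => z y /orP [] /eqP ->.
  rewrite (c_s1 X); apply: (rr_sub KM).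
  by have [_ _ ] := faceend_spec vG eK (eS_ext X z).
rewrite sub_s2E; case: ifP => Hz; last exact: connect0.
apply: connect1; rewrite /= (c_s2 X) sub_s2E -(c_mu X) inM_eH Hz.
by rewrite eqxx orbT.
Qed.

Lemma comp_isContr : isContr D M.
Proof.
apply: (@IsC D G M (qV Y \o qV X) (eH X \o eH Y) (eS X \o eS Y)).
- move=> x; have [y <-] := qV_surj Y x; have [v <-] := qV_surj X y.
  by exists v.
- move=> v w /=; rewrite (qV_ker Y); apply/idP/idP.
    apply: (connect_lift (m := qV X)).
    + move=> a b /eqP; rewrite (qV_ker X); apply: (@compRel_sub G K M KM).
    + move=> a b /existsP [h' /and3P [h'K /eqP ha /eqP hb]].
      rewrite (c_nu X) in ha; rewrite (c_nu X) in hb.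
      move/eqP: ha; rewrite (qV_ker X) (compRel_csym vG eK) => ha.
      move/eqP: hb; rewrite (qV_ker X) => hb.
      apply: connect_trans (@compRel_sub G K M KM _ _ ha) _.
      apply: connect_trans _ (@compRel_sub G K M KM _ _ hb).
      apply: connect1; apply/existsP; exists (eH X h').
      by rewrite inM_eH h'K -(c_iota X) !eqxx.
    + exact: qV_surj.
  apply: (@connect_map _ _ _ _ (qV X)) => a b /existsP [h /and3P [hM /eqP ha /eqP hb]].
  move: hM; rewrite inE => /orP [hK|].
    apply: eq_connect0; apply/eqP; rewrite (qV_ker X); apply: connect1.
    by apply/existsP; exists h; rewrite hK ha hb !eqxx.
  case/imsetP => h' h'K hE; apply: connect1; apply/existsP; exists h'.
  by rewrite h'K !(c_nu X) (c_iota X) -hE ha hb !eqxx.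
- exact: inj_comp.
- exact: inj_comp.
- move=> h; apply/codomP/idP => [[x ->]|].
    by rewrite /= inM_eH; apply: eH_ext.
  rewrite inE negb_or => /andP [hK hI].
  have : h \in codom (eH X) by rewrite (eH_im X).
  case/codomP => y hy; move: hI; rewrite hy mem_imset // => yK.
  have : y \in codom (eH Y) by rewrite (eH_im Y).
  by case/codomP => x ->; exists x.
- move=> s; apply/codomP/idP => [[x ->]|].
    by rewrite /= -(c_mu X) inM_eH; apply: eS_ext.
  rewrite inE negb_or => /andP [sK sI].
  have : s \in codom (eS X) by rewrite (eS_im X).
  case/codomP => y sy; move: sI; rewrite sy -(c_mu X) mem_imset // => yK.
  have : y \in codom (eS Y) by rewrite (eS_im Y).
  by case/codomP => x ->; exists x.
- by move=> h /=; rewrite (c_nu Y) (c_nu X).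
- by move=> h /=; rewrite (c_iota Y) (c_iota X).
- by move=> s /=; rewrite (c_mu Y) (c_mu X).
- by move=> s /=; rewrite (c_s1 Y) comp_face // eS_ext.
- by move=> s /=; rewrite (c_s2 Y) (c_s2 X).
Qed.
End Comp.

Lemma face_map G H (K : {set 'I_(nh G)}) (K' : {set 'I_(nh H)})
  (m : 'I_(ns G) -> 'I_(ns H)) :
  valid2 G -> valid2 H -> edgeset K -> edgeset K' -> injective m ->
  (forall x, m (g_s1 G x) = g_s1 H (m x)) ->
  (forall x, m (sub_s2 K x) = sub_s2 K' (m x)) ->
  (forall x, (g_mu H (m x) \in K') = (g_mu G x \in K)) ->
  forall t, g_mu G t \notin K -> m (faceend K t) = faceend K' (m t).
Proof.
move=> vG vH eK eK' mi m1 m2 mK t tK.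
have [H1 H2 H3] := faceend_spec vG eK tK.
apply: (faceend_uniq vH eK'); rewrite ?mK ?(inj_eq mi) //.
apply: (@connect_map _ _ _ _ m) H3 => x y /orP [] /eqP ->; apply: connect1.
  by rewrite /= m1 eqxx.
by rewrite /= m2 eqxx orbT.
Qed.

Lemma subg_valid G (K : {set 'I_(nh G)}) : valid2 G -> edgeset K -> valid2 (subg K).
Proof.
move=> vG eK; apply: validI => /=.
- move=> h; rewrite [sub_iota K h]sub_iotaE; case: ifP => hK; rewrite sub_iotaE ?hK //.
  by rewrite (eK_in eK hK) v_iotaK.
- exact: v_s1K.
- exact: v_s1F.
- exact: v_s1nu.
- exact: sub_s2K.
- move=> s; rewrite sub_iotaE sub_s2E; case: ifP => // _; exact: v_iotamu.
- move=> s; rewrite sub_iotaE sub_s2E; case: ifP => hK; rewrite ?eqxx //.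
  rewrite v_s2fix //; apply/negbTE/negbTE; exact: eK_neq.
Qed.

Lemma subg_edgeset G (K M : {set 'I_(nh G)}) : edgeset K -> K \subset M ->
  edgeset (K : {set 'I_(nh (subg M))}).
Proof.
move=> eK KM; apply/forallP => h; apply/implyP => hK /=.
by rewrite sub_iotaE (subsetP KM _ hK) (eK_in eK hK) (eK_neq eK hK).
Qed.

Lemma inG2_subg V G (M : {set 'I_(nh G)}) : inG2 V G -> edgeset M -> inG2 V (subg M).
Proof. by case=> vG HV eM; split; [exact: subg_valid | exact: HV]. Qed.

Section SubgContr.
Variable G : graph2.
Hypothesis vG : valid2 G.
Variable K : {set 'I_(nh G)}.
Hypothesis eK : edgeset K.
Variable C : graph2.
Variable X : isContr C K.
Variable K' : {set 'I_(nh C)}.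
Hypothesis eK' : edgeset K'.
Local Notation M := (Mset X K').

Lemma faceend_subg s :
  faceend (K : {set 'I_(nh (subg M))}) s = faceend K s.
Proof.
rewrite /faceend /=; apply: eq_iter => x /=.
have E : forall y, sub_s2 (K : {set 'I_(nh (subg M))}) y = sub_s2 K y.
  move=> y; rewrite !sub_s2E /=; case: ifP => // yK.
  by rewrite sub_s2E (subsetP (KM X K') _ yK).
by rewrite !E.
Qed.

Lemma subg_isContr : isContr (subg K') (K : {set 'I_(nh (subg M))}).
Proof.
apply: (@IsC (subg K') (subg M) K (qV X) (eH X) (eS X)).
- exact (qV_surj X).
- move=> v w; rewrite (qV_ker X); apply: eq_connect => a b.
  apply/existsP/existsP => -[h /and3P [hK ha hb]]; exists h; rewrite hK ha /=;
    by move: hb; rewrite /= sub_iotaE (subsetP (KM X K') _ hK).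
- exact (@eH_inj _ _ _ X).
- exact (@eS_inj _ _ _ X).
- exact (eH_im X).
- exact (eS_im X).
- exact (c_nu X).
- move=> h /=; rewrite !sub_iotaE inM_eH; case: ifP => // _; exact: (c_iota X).
- exact (c_mu X).
- by move=> s /=; rewrite faceend_subg (c_s1 X).
- move=> s /=; rewrite !sub_s2E -(c_mu X) inM_eH; case: ifP => // _; exact: (c_s2 X).
Qed.
End SubgContr.

Section IsoT.
Variables G H : graph2.
Variable I : isoM G H.
Local Notation fV := (iV I).
Local Notation fH := (iH I).
Local Notation fS := (iS I).
Let fH_inj : injective fH := bij_inj (iH_bij I).
Let fS_inj : injective fS := bij_inj (iS_bij I).
Let fV_inj : injective fV := bij_inj (iV_bij I).

Lemma iso_edgeset K : edgeset K -> edgeset (fH @: K).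
Proof.
move=> eK; apply/forallP => h'; apply/implyP => /imsetP [h hK ->].
by rewrite -(i_iota I) mem_imset // (eK_in eK hK) (inj_eq fH_inj) (eK_neq eK hK).
Qed.

Lemma iso_subg K : isoP (subg K) (subg (fH @: K)).
Proof.
constructor; apply: (@IsoM (subg K) (subg (fH @: K)) fV fH fS).
- exact: (iV_bij I).
- exact: (iH_bij I).
- exact: (iS_bij I).
- exact: (i_nu I).
- by move=> h /=; rewrite !sub_iotaE mem_imset //; case: ifP => // _; exact: (i_iota I).
- exact: (i_mu I).
- exact: (i_s1 I).
- by move=> s /=; rewrite !sub_s2E -(i_mu I) mem_imset //; case: ifP => // _; exact: (i_s2 I).
Qed.

Hypothesis vG : valid2 G.
Lemma iso_validH : valid2 H.
Proof. by apply: (iso2_valid _ vG); apply/iso2P; constructor; exact: I. Qed.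

Variable K : {set 'I_(nh G)}.
Hypothesis eK : edgeset K.

Lemma iso_face t : g_mu G t \notin K -> fS (faceend K t) = faceend (fH @: K) (fS t).
Proof.
apply: face_map => //.
- exact: iso_validH.
- exact: iso_edgeset.
- exact: (i_s1 I).
- by move=> x; rewrite !sub_s2E -(i_mu I) mem_imset //; case: ifP => // _; exact: (i_s2 I).
- by move=> x; rewrite -(i_mu I) mem_imset.
Qed.

Lemma iso_contr C (X : isContr C (fH @: K)) : inhabited (isContr C K).
Proof.
case: (iV_bij I) => jV fgV gfV; case: (iH_bij I) => jH fgH gfH.
case: (iS_bij I) => jS fgS gfS.
have jH_inj : injective jH := can_inj gfH.
have jS_inj : injective jS := can_inj gfS.
have nuH y : g_nu H y = fV (g_nu G (jH y)) by rewrite (i_nu I) gfH.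
have iotaH y : g_iota H y = fH (g_iota G (jH y)) by rewrite (i_iota I) gfH.
have muH y : g_mu H y = fH (g_mu G (jS y)) by rewrite (i_mu I) gfS.
constructor; apply: (@IsC C G K (qV X \o fV) (jH \o eH X) (jS \o eS X)).
- move=> x; have [w <-] := qV_surj X x; exists (jV w); by rewrite /= gfV.
- move=> v w; rewrite /= (qV_ker X); apply/idP/idP => Hc.
    rewrite -(fgV v) -(fgV w).
    apply: (@connect_map _ _ _ _ jV) Hc => a b /existsP [h' /and3P [hK /eqP ha /eqP hb]].
    case/imsetP: hK => h hK hE; subst h'; apply: connect1; apply/existsP; exists h.
    by rewrite hK -ha -hb -(i_iota I) -!(i_nu I) !fgV !eqxx.
  apply: (@connect_map _ _ _ _ fV) Hc => a b /existsP [h /and3P [hK /eqP ha /eqP hb]].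
  apply: connect1; apply/existsP; exists (fH h).
  by rewrite (mem_imset _ _ fH_inj) hK -(i_iota I) -!(i_nu I) ha hb !eqxx.
- exact: (inj_comp jH_inj (@eH_inj _ _ _ X)).
- exact: (inj_comp jS_inj (@eS_inj _ _ _ X)).
- move=> h; apply/codomP/idP => [[x ->]|hK].
    by rewrite /= -(mem_imset _ _ fH_inj) gfH eH_ext.
  have : fH h \in codom (eH X) by rewrite (eH_im X) mem_imset.
  by case/codomP => x hx; exists x; rewrite /= -hx fgH.
- move=> s; apply/codomP/idP => [[x ->]|sK].
    by rewrite /= -(mem_imset _ _ fH_inj) (i_mu I) gfS eS_ext.
  have : fS s \in codom (eS X) by rewrite (eS_im X) -(i_mu I) mem_imset.
  by case/codomP => x sx; exists x; rewrite /= -sx fgS.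
- by move=> h /=; rewrite (c_nu X) nuH.
- by move=> h /=; rewrite (c_iota X) iotaH fgH.
- by move=> s /=; rewrite (c_mu X) muH fgH.
- move=> s /=; rewrite (c_s1 X); apply: fS_inj; rewrite gfS iso_face ?gfS //.
  by rewrite -(mem_imset _ _ fH_inj) (i_mu I) gfS eS_ext.
- by move=> s /=; rewrite (c_s2 X) -{1}(gfS (eS X s)) -(i_s2 I) fgS.
Qed.

Lemma iso_contrP : isoP (contr K) (contr (fH @: K)).
Proof.
have [Y] := iso_contr (contr_isContr iso_validH (iso_edgeset eK)).
exact: contr_uniq (contr_isContr vG eK) Y.
Qed.
End IsoT.

Lemma ord_case m n (P : 'I_(m + n) -> Prop) :
  (forall x, P (lshift n x)) -> (forall y, P (rshift m y)) -> forall z, P z.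
Proof. by move=> HL HR z; case: (split_ordP z) => [x ->|y ->]. Qed.

Lemma split_l m n (x : 'I_m) : split (lshift n x) = inl x.
Proof. exact: (unsplitK (inl _ x)). Qed.
Lemma split_r m n (y : 'I_n) : split (rshift m y) = inr y.
Proof. exact: (unsplitK (inr _ y)). Qed.

Lemma sumfL a b c d (f : 'I_a -> 'I_b) (g : 'I_c -> 'I_d) x :
  sumf f g (lshift c x) = lshift d (f x).
Proof. by rewrite /sumf split_l. Qed.
Lemma sumfR a b c d (f : 'I_a -> 'I_b) (g : 'I_c -> 'I_d) y :
  sumf f g (rshift a y) = rshift b (g y).
Proof. by rewrite /sumf split_r. Qed.

Lemma sumf_inj a b c d (f : 'I_a -> 'I_b) (g : 'I_c -> 'I_d) :
  injective f -> injective g -> injective (sumf f g).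
Proof.
move=> fi gi; elim/ord_case => x; elim/ord_case => y;
  rewrite ?sumfL ?sumfR => /eqP; rewrite ?eq_shift // => /eqP e;
  by rewrite ?(fi _ _ e) ?(gi _ _ e).
Qed.

Lemma codom_sumfL a b c d (f : 'I_a -> 'I_b) (g : 'I_c -> 'I_d) x :
  (lshift d x \in codom (sumf f g)) = (x \in codom f).
Proof.
apply/codomP/codomP => [[z]|[z ->]]; last by exists (lshift c z); rewrite sumfL.
by elim/ord_case: z => z; rewrite ?sumfL ?sumfR => /eqP; rewrite ?eq_shift // => /eqP ->;
  exists z.
Qed.
Lemma codom_sumfR a b c d (f : 'I_a -> 'I_b) (g : 'I_c -> 'I_d) y :
  (rshift b y \in codom (sumf f g)) = (y \in codom g).
Proof.
apply/codomP/codomP => [[z]|[z ->]]; last by exists (rshift a z); rewrite sumfR.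
by elim/ord_case: z => z; rewrite ?sumfL ?sumfR => /eqP; rewrite ?eq_shift // => /eqP ->;
  exists z.
Qed.

Section DU0.
Variables G H : graph2.
Local Notation D := (dunion G H).

Lemma du_nuL h : g_nu D (lshift _ h) = lshift _ (g_nu G h). Proof. by rewrite ffunE sumfL. Qed.
Lemma du_nuR h : g_nu D (rshift _ h) = rshift _ (g_nu H h). Proof. by rewrite ffunE sumfR. Qed.
Lemma du_iotaL h : g_iota D (lshift _ h) = lshift _ (g_iota G h). Proof. by rewrite ffunE sumfL. Qed.
Lemma du_iotaR h : g_iota D (rshift _ h) = rshift _ (g_iota H h). Proof. by rewrite ffunE sumfR. Qed.
Lemma du_muL s : g_mu D (lshift _ s) = lshift _ (g_mu G s). Proof. by rewrite ffunE sumfL. Qed.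
Lemma du_muR s : g_mu D (rshift _ s) = rshift _ (g_mu H s). Proof. by rewrite ffunE sumfR. Qed.
Lemma du_s1L s : g_s1 D (lshift _ s) = lshift _ (g_s1 G s). Proof. by rewrite ffunE sumfL. Qed.
Lemma du_s1R s : g_s1 D (rshift _ s) = rshift _ (g_s1 H s). Proof. by rewrite ffunE sumfR. Qed.
Lemma du_s2L s : g_s2 D (lshift _ s) = lshift _ (g_s2 G s). Proof. by rewrite ffunE sumfL. Qed.
Lemma du_s2R s : g_s2 D (rshift _ s) = rshift _ (g_s2 H s). Proof. by rewrite ffunE sumfR. Qed.

End DU0.

Definition duE := (du_nuL, du_nuR, du_iotaL, du_iotaR, du_muL, du_muR, du_s1L, du_s1R,
  du_s2L, du_s2R).

Section DU.
Variables G H : graph2.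
Local Notation D := (dunion G H).

Lemma dunion_valid : valid2 G -> valid2 H -> valid2 D.
Proof.
move=> vG vH; apply: validI.
- by elim/ord_case => h; rewrite !duE v_iotaK.
- by elim/ord_case => h; rewrite !duE v_s1K.
- by elim/ord_case => h; rewrite !duE eq_shift v_s1F.
- by elim/ord_case => h; rewrite !duE v_s1nu.
- by elim/ord_case => h; rewrite !duE v_s2K.
- by elim/ord_case => h; rewrite !duE v_iotamu.
- by elim/ord_case => h; rewrite !duE !eq_shift v_s2fix.
Qed.

Variables (K1 : {set 'I_(nh G)}) (K2 : {set 'I_(nh H)}).
Definition Uset : {set 'I_(nh (dunion G H))} := @lshift (nh G) (nh H) @: K1 :|: @rshift (nh G) (nh H) @: K2.
Local Notation U := Uset.

Lemma inUL x : (lshift _ x \in U) = (x \in K1).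
Proof.
rewrite inE mem_imset; last exact: lshift_inj.
case: (x \in K1) => //=; apply/imsetP => -[y _ /eqP]; by rewrite eq_shift.
Qed.
Lemma inUR x : (rshift _ x \in U) = (x \in K2).
Proof.
rewrite inE (mem_imset _ _ (@rshift_inj _ _)) orbC.
case: (x \in K2) => //=; apply/imsetP => -[y _ /eqP]; by rewrite eq_shift.
Qed.

Lemma sub_s2UL s : sub_s2 U (lshift _ s) = lshift _ (sub_s2 K1 s).
Proof. by rewrite !sub_s2E du_muL inUL; case: ifP; rewrite ?du_s2L. Qed.
Lemma sub_s2UR s : sub_s2 U (rshift _ s) = rshift _ (sub_s2 K2 s).
Proof. by rewrite !sub_s2E du_muR inUR; case: ifP; rewrite ?du_s2R. Qed.
Lemma sub_iotaUL s : sub_iota U (lshift _ s) = lshift _ (sub_iota K1 s).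
Proof. by rewrite !sub_iotaE inUL; case: ifP; rewrite ?du_iotaL. Qed.
Lemma sub_iotaUR s : sub_iota U (rshift _ s) = rshift _ (sub_iota K2 s).
Proof. by rewrite !sub_iotaE inUR; case: ifP; rewrite ?du_iotaR. Qed.

Lemma edgesetU : edgeset U = edgeset K1 && edgeset K2.
Proof.
apply/idP/andP => [/forallP eU|[eK1 eK2]].
  split; apply/forallP => h; apply/implyP => hK.
    by move: (eU (lshift _ h)); rewrite inUL hK /= du_iotaL inUL eq_shift.
  by move: (eU (rshift _ h)); rewrite inUR hK /= du_iotaR inUR eq_shift.
apply/forallP; elim/ord_case => h; apply/implyP.
  by rewrite inUL => hK; rewrite du_iotaL inUL eq_shift (eK_in eK1) ?(eK_neq eK1).
by rewrite inUR => hK; rewrite du_iotaR inUR eq_shift (eK_in eK2) ?(eK_neq eK2).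
Qed.

Lemma du_subg : isoP (subg U) (dunion (subg K1) (subg K2)).
Proof.
constructor; apply: (@IsoM (subg U) (dunion (subg K1) (subg K2)) id id id);
  try exact: inv_bij.
- by elim/ord_case => h; rewrite [RHS]ffunE ?sumfL ?sumfR !duE.
- by elim/ord_case => h; rewrite [RHS]ffunE ?sumfL ?sumfR ?sub_iotaUL ?sub_iotaUR.
- by elim/ord_case => h; rewrite [RHS]ffunE ?sumfL ?sumfR !duE.
- by elim/ord_case => h; rewrite [RHS]ffunE ?sumfL ?sumfR !duE.
- by elim/ord_case => h; rewrite [RHS]ffunE ?sumfL ?sumfR ?sub_s2UL ?sub_s2UR.
Qed.

Lemma connect_eq (T : finType) (x y : T) : connect [rel a b | a == b] x y -> x = y.
Proof.
move=> /connectP [p Hp ->]; elim: p x Hp => //= z p IH x /andP [/eqP -> Hp].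
exact: IH.
Qed.

Hypothesis vG : valid2 G.
Hypothesis vH : valid2 H.
Hypothesis eK1 : edgeset K1.
Hypothesis eK2 : edgeset K2.
Let vD : valid2 D := dunion_valid vG vH.
Let eU : edgeset U. Proof. by rewrite edgesetU eK1 eK2. Qed.

Lemma connUL a b : connect (compRel K1) a b -> connect (compRel U) (lshift _ a) (lshift _ b).
Proof.
apply: (@connect_map _ _ _ _ (@lshift _ _)) => x y /existsP [h /and3P [hK hx hy]].
apply: connect1; apply/existsP; exists (lshift _ h).
by rewrite inUL hK !duE !eq_shift hx hy.
Qed.
Lemma connUR a b : connect (compRel K2) a b -> connect (compRel U) (rshift _ a) (rshift _ b).
Proof.
apply: (@connect_map _ _ _ _ (@rshift _ _)) => x y /existsP [h /and3P [hK hx hy]].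
apply: connect1; apply/existsP; exists (rshift _ h).
by rewrite inUR hK !duE !eq_shift hx hy.
Qed.

Variables (C1 C2 : graph2) (X1 : isContr C1 K1) (X2 : isContr C2 K2).

Lemma du_isContr : isContr (dunion C1 C2) U.
Proof.
apply: (@IsC (dunion C1 C2) D U (sumf (qV X1) (qV X2)) (sumf (eH X1) (eH X2))
                                  (sumf (eS X1) (eS X2))).
- elim/ord_case => x.
    by have [v <-] := qV_surj X1 x; exists (lshift _ v); rewrite sumfL.
  by have [v <-] := qV_surj X2 x; exists (rshift _ v); rewrite sumfR.
- move=> v w; apply/idP/idP; last first.
    move=> Hc; apply/eqP; apply: connect_eq.
    apply: (@connect_map _ _ _ _ (sumf (qV X1) (qV X2))) Hc => a b.
    move=> /existsP [h /and3P [hU /eqP ha /eqP hb]]; apply: connect1 => /=.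
    subst a b; elim/ord_case: h hU => h; rewrite ?inUL ?inUR => hK.
      rewrite !duE !sumfL eq_shift (qV_ker X1); apply: connect1.
      by apply/existsP; exists h; rewrite hK !eqxx.
    rewrite !duE !sumfR eq_shift (qV_ker X2); apply: connect1.
    by apply/existsP; exists h; rewrite hK !eqxx.
  elim/ord_case: v => v; elim/ord_case: w => w;
    rewrite ?sumfL ?sumfR ?eq_shift //.
    by rewrite (qV_ker X1); apply: connUL.
  by rewrite (qV_ker X2); apply: connUR.
- exact: (sumf_inj (@eH_inj _ _ _ X1) (@eH_inj _ _ _ X2)).
- exact: (sumf_inj (@eS_inj _ _ _ X1) (@eS_inj _ _ _ X2)).
- elim/ord_case => h.
    by rewrite codom_sumfL inUL (eH_im X1).
  by rewrite codom_sumfR inUR (eH_im X2).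
- elim/ord_case => s.
    by rewrite codom_sumfL du_muL inUL (eS_im X1).
  by rewrite codom_sumfR du_muR inUR (eS_im X2).
- by elim/ord_case => h; rewrite !duE ?sumfL ?sumfR !duE ?sumfL ?sumfR ?(c_nu X1) ?(c_nu X2).
- by elim/ord_case => h; rewrite !duE ?sumfL ?sumfR !duE ?sumfL ?sumfR ?(c_iota X1) ?(c_iota X2).
- by elim/ord_case => h; rewrite !duE ?sumfL ?sumfR !duE ?sumfL ?sumfR ?(c_mu X1) ?(c_mu X2).
- elim/ord_case => s; rewrite !duE ?sumfL ?sumfR.
    rewrite (c_s1 X1); apply: face_map => //; first exact: lshift_inj.
    + by move=> x; rewrite duE.
    + by move=> x; rewrite sub_s2UL.
    + by move=> x; rewrite duE inUL.
    + exact: eS_ext.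
  rewrite (c_s1 X2); apply: face_map => //; first exact: rshift_inj.
  + by move=> x; rewrite duE.
  + by move=> x; rewrite sub_s2UR.
  + by move=> x; rewrite duE inUR.
  + exact: eS_ext.
- by elim/ord_case => h; rewrite !duE ?sumfL ?sumfR !duE ?sumfL ?sumfR ?(c_s2 X1) ?(c_s2 X2).
Qed.
End DU.

Lemma du_contrP G H (K1 : {set 'I_(nh G)}) (K2 : {set 'I_(nh H)}) :
  valid2 G -> valid2 H -> edgeset K1 -> edgeset K2 ->
  isoP (contr (Uset K1 K2)) (dunion (contr K1) (contr K2)).
Proof.
move=> vG vH e1 e2.
have eU : edgeset (Uset K1 K2) by rewrite edgesetU e1 e2.
apply: contr_uniq (contr_isContr (dunion_valid vG vH) eU) _.
exact: du_isContr (contr_isContr vG e1) (contr_isContr vH e2).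
Qed.

Import GRing.Theory.
Local Open Scope ring_scope.

Lemma Allp_cat T (P : T -> Prop) s1 s2 : Allp P s1 -> Allp P s2 -> Allp P (s1 ++ s2).
Proof. by elim: s1 => //= x s IH [Hx Hs] H2; split => //; apply: IH. Qed.

Lemma Allp_map T U (P : U -> Prop) (f : T -> U) s :
  Allp (fun x => P (f x)) s -> Allp P (map f s).
Proof. by elim: s => //= x s IH [Hx Hs]; split => //; apply: IH. Qed.

Lemma Allp_in (T : eqType) (P : T -> Prop) s : (forall x, x \in s -> P x) -> Allp P s.
Proof.
elim: s => //= x s IH H; split; first by apply: H; rewrite inE eqxx.
by apply: IH => y ys; apply: H; rewrite inE ys orbT.
Qed.

Lemma Allp_flatten T (P : T -> Prop) ss : Allp (Allp P) ss -> Allp P (flatten ss).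
Proof. by elim: ss => //= s ss IH [Hs Hss]; apply: Allp_cat => //; apply: IH. Qed.

Lemma Allp_allpairs T U W (P : W -> Prop) (f : T -> U -> W) s t :
  Allp (fun x => Allp (fun y => P (f x y)) t) s -> Allp P [seq f x y | x <- s, y <- t].
Proof.
elim: s => //= x s IH [Hx Hs]; apply: Allp_cat; last exact: IH.
exact: Allp_map.
Qed.

Lemma Allp_impl T (P Q : T -> Prop) s : (forall x, P x -> Q x) -> Allp P s -> Allp Q s.
Proof. by move=> H; elim: s => //= x s IH [Hx Hs]; split; [apply: H | apply: IH]. Qed.

Section SumInv.
Variable T : Type.
Variable R : T -> T -> bool.
Hypothesis Rrefl : forall x, R x x.
Hypothesis Rsym : forall x y, R x y = R y x.
Hypothesis Rtrans : forall x y z, R x y -> R y z -> R x z.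
Variable P : T -> Prop.
Variable F : T -> rat.
Hypothesis FR : forall x y, P x -> P y -> R x y -> F x = F y.

Definition cR (s : seq (rat * T)) (x : T) : rat := \sum_(p <- s | R p.2 x) p.1.

Lemma sumR_part s x : P x -> Allp (fun p => P p.2) s ->
  \sum_(p <- s | R p.2 x) p.1 * F p.2 = cR s x * F x.
Proof.
move=> Px; rewrite /cR; elim: s => [|p s IH] /=; first by rewrite !big_nil mul0r.
case=> Pp Ps; rewrite !big_cons; case: ifP => Rp; last exact: IH.
by rewrite IH // mulrDl (FR Pp Px Rp).
Qed.

Lemma cR_filter s x y :
  cR (filter (fun p => ~~ R p.2 x) s) y = if R y x then 0 else cR s y.
Proof.
rewrite /cR big_filter_cond; case: ifP => Ryx.
  rewrite big1 // => p /andP [nR Rp].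
  by move: nR; rewrite (Rtrans Rp Ryx).
apply: eq_bigl => p; case Rp: (R p.2 y); rewrite ?andbF ?andbT //.
apply/negP => Rpx; move: Ryx; rewrite Rsym in Rp.
by rewrite (Rtrans Rp Rpx).
Qed.

Lemma Allp_filter (Q : T -> Prop) (a : pred (rat * T)) s :
  Allp (fun p => Q p.2) s -> Allp (fun p => Q p.2) (filter a s).
Proof.
elim: s => //= p s IH H; have [Hp Hs] := H.
case: (a p) => //=; [split => //; exact: IH | exact: IH].
Qed.

Lemma split_sum s x : P x -> Allp (fun p => P p.2) s ->
  \sum_(p <- s) p.1 * F p.2 =
  cR s x * F x + \sum_(p <- filter (fun p => ~~ R p.2 x) s) p.1 * F p.2.
Proof.
move=> Px Ps; rewrite (bigID (fun p => R p.2 x)) /= sumR_part //.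
by rewrite big_filter.
Qed.

Lemma size_filter_le (a : pred (rat * T)) s : (size (filter a s) <= size s)%N.
Proof. by rewrite size_filter count_size. Qed.

Lemma sum_inv s s' : Allp (fun p => P p.2) s -> Allp (fun p => P p.2) s' ->
  (forall x, cR s x = cR s' x) ->
  \sum_(p <- s) p.1 * F p.2 = \sum_(p <- s') p.1 * F p.2.
Proof.
have [n Hn] : exists n, (size s + size s' <= n)%N by exists (size s + size s').
elim: n s s' Hn => [|n IH] s s'.
  by case: s => //; case: s' => // _ _ _ _; rewrite !big_nil.
move=> Hn Ps Ps' Hc.
have step : forall x, P x ->
    (size (filter (fun p => ~~ R p.2 x) s) + size (filter (fun p => ~~ R p.2 x) s') <= n)%N ->
    \sum_(p <- s) p.1 * F p.2 = \sum_(p <- s') p.1 * F p.2.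
  move=> x Px Hs; rewrite (split_sum Px Ps) (split_sum Px Ps') Hc; congr (_ + _).
  apply: IH => //; try exact: Allp_filter.
  by move=> y; rewrite !cR_filter Hc.
case: s Hn Ps Hc step => [|p0 s1] Hn Ps Hc step.
  case: s' Hn Ps' Hc step => [|q0 s1'] Hn Ps' Hc step; first by rewrite !big_nil.
  apply: (step q0.2); first by case: Ps'.
  rewrite /= Rrefl /=; have := size_filter_le (fun p => ~~ R p.2 q0.2) s1'.
  by move: Hn => /=; lia.
apply: (step p0.2); first by case: Ps.
rewrite /= Rrefl /=; have := size_filter_le (fun p => ~~ R p.2 p0.2) s1.
have := size_filter_le (fun p => ~~ R p.2 p0.2) s'.
by move: Hn => /=; lia.
Qed.
End SumInv.

Definition ind2 (a b : graph2) (x : graph2 * graph2) : rat :=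
  (iso2 x.1 a && iso2 x.2 b)%:R.

Lemma coef2E t a b : coef2 t a b = \sum_(p <- t) p.1 * ind2 a b p.2.
Proof.
rewrite /coef2 big_mkcond; apply: eq_bigr => p _ /=; rewrite /ind2.
by case: ifP; rewrite ?mulr1 ?mulr0.
Qed.

Lemma ind2_iso a b x y : iso2 x.1 y.1 -> iso2 x.2 y.2 -> ind2 a b x = ind2 a b y.
Proof.
move=> h1 h2; rewrite /ind2.
have E g g' : iso2 g g' -> forall k, iso2 g k = iso2 g' k.
  move=> i k; apply/idP/idP => H; last exact: iso2_trans i H.
  by apply: iso2_trans _ H; rewrite iso2_sym.
by rewrite (E _ _ h1) (E _ _ h2).
Qed.

Lemma flat_sum (X : Type) (s : seq X) (c : X -> rat) (L : X -> vec2) F :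
  \sum_(p <- flatten [seq [seq (c x * q.1, q.2) | q <- L x] | x <- s]) p.1 * F p.2 =
  \sum_(x <- s) c x * \sum_(q <- L x) q.1 * F q.2.
Proof.
rewrite big_flatten big_map; apply: eq_bigr => x _.
by rewrite big_map mulr_sumr; apply: eq_bigr => q _ /=; rewrite mulrA.
Qed.

Lemma Delta_sum u F : \sum_(p <- Delta u) p.1 * F p.2 =
  \sum_(p <- u) p.1 * \sum_(q <- cop1 p.2) q.1 * F q.2.
Proof. exact: flat_sum. Qed.

Definition TT (ab : seq (rat * (vec * vec))) : vec2 :=
  flatten [seq [seq (p.1 * q.1, q.2) | q <- tens p.2.1 p.2.2] | p <- ab].

Lemma TT_sum ab F : \sum_(p <- TT ab) p.1 * F p.2 =
  \sum_(p <- ab) p.1 * \sum_(q <- tens p.2.1 p.2.2) q.1 * F q.2.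
Proof. exact: flat_sum. Qed.

Lemma tens_sum u v F : \sum_(z <- tens u v) z.1 * F z.2 =
  \sum_(p <- u) \sum_(q <- v) p.1 * q.1 * F (p.2, q.2).
Proof. by rewrite /tens big_allpairs_dep. Qed.

Lemma cop1_sum G F : \sum_(q <- cop1 G) q.1 * F q.2 =
  \sum_(K : {set 'I_(nh G)} | edgeset K) F (subg K, contr K).
Proof.
rewrite /cop1 big_map big_enum /=; apply: eq_big => [K|K _]; first by rewrite inE.
by rewrite mul1r.
Qed.

Lemma valid_Allp v : valid_vec v -> Allp (fun p => valid2 p.2) v.
Proof. by elim: v => //= p v IH /andP [h1 h2]; split => //; apply: IH. Qed.

Lemma cop1_iso G H (F : graph2 * graph2 -> rat) :
  (forall x y, iso2 x.1 y.1 -> iso2 x.2 y.2 -> F x = F y) ->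
  valid2 G -> iso2 G H ->
  \sum_(K : {set 'I_(nh G)} | edgeset K) F (subg K, contr K) =
  \sum_(K : {set 'I_(nh H)} | edgeset K) F (subg K, contr K).
Proof.
move=> FR vG /iso2P [I].
have [jH fgH gfH] := iH_bij I.
have fH_inj : injective (iH I) := can_inj fgH.
rewrite (reindex (fun K : {set 'I_(nh G)} => iH I @: K)) /=; last first.
  exists (fun K : {set 'I_(nh H)} => jH @: K) => K _.
    by rewrite -imset_comp (eq_imset _ fgH) imset_id.
  by rewrite -imset_comp (eq_imset _ gfH) imset_id.
apply: eq_big => [K|K eK].
  apply/idP/idP; first exact: (@iso_edgeset G H I K).
  move=> /forallP e; apply/forallP => h; apply/implyP => hK.
  move: (e (iH I h)); rewrite mem_imset // hK /= -(i_iota I) mem_imset //.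
  by rewrite (inj_eq fH_inj).
apply: FR => /=.
  by apply/iso2P; exact: iso_subg.
by apply/iso2P; exact: iso_contrP.
Qed.

Lemma cop1_isoC G H a b : valid2 G -> iso2 G H ->
  coef2 (cop1 G) a b = coef2 (cop1 H) a b.
Proof.
move=> vG iGH; rewrite !coef2E !cop1_sum; apply: cop1_iso => //.
exact: ind2_iso.
Qed.

Lemma Delta_veq u v : valid_vec u -> valid_vec v -> veq u v -> veq2 (Delta u) (Delta v).
Proof.
move=> vu vv e a b; rewrite !coef2E !Delta_sum.
apply: (@sum_inv _ iso2 iso2_refl iso2_sym (@iso2_trans) valid2
          (fun g => \sum_(q <- cop1 g) q.1 * ind2 a b q.2)).
- move=> x y vx vy ixy; rewrite -!coef2E; exact: cop1_isoC.
- exact: valid_Allp.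
- exact: valid_Allp.
- exact: e.
Qed.

Lemma sumf_bij a b c d (f : 'I_a -> 'I_b) (g : 'I_c -> 'I_d) :
  bijective f -> bijective g -> bijective (sumf f g).
Proof.
case=> f' f1 f2 [g' g1 g2]; exists (sumf f' g').
  by elim/ord_case => x; rewrite ?sumfL ?sumfR ?f1 ?g1.
by elim/ord_case => x; rewrite ?sumfL ?sumfR ?f2 ?g2.
Qed.

Lemma du_iso G G' H H' : iso2 G G' -> iso2 H H' -> iso2 (dunion G H) (dunion G' H').
Proof.
move=> /iso2P [I] /iso2P [J]; apply/iso2P; constructor.
apply: (@IsoM (dunion G H) (dunion G' H') (sumf (iV I) (iV J)) (sumf (iH I) (iH J))
          (sumf (iS I) (iS J))).
- exact: sumf_bij (iV_bij I) (iV_bij J).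
- exact: sumf_bij (iH_bij I) (iH_bij J).
- exact: sumf_bij (iS_bij I) (iS_bij J).
- by elim/ord_case => x; rewrite !duE ?sumfL ?sumfR !duE ?(i_nu I) ?(i_nu J).
- by elim/ord_case => x; rewrite !duE ?sumfL ?sumfR !duE ?(i_iota I) ?(i_iota J).
- by elim/ord_case => x; rewrite !duE ?sumfL ?sumfR !duE ?(i_mu I) ?(i_mu J).
- by elim/ord_case => x; rewrite !duE ?sumfL ?sumfR !duE ?(i_s1 I) ?(i_s1 J).
- by elim/ord_case => x; rewrite !duE ?sumfL ?sumfR !duE ?(i_s2 I) ?(i_s2 J).
Qed.

Lemma cop1_du G H (F : graph2 * graph2 -> rat) :
  (forall x y, iso2 x.1 y.1 -> iso2 x.2 y.2 -> F x = F y) ->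
  valid2 G -> valid2 H ->
  \sum_(K : {set 'I_(nh (dunion G H))} | edgeset K) F (subg K, contr K) =
  \sum_(K1 : {set 'I_(nh G)} | edgeset K1) \sum_(K2 : {set 'I_(nh H)} | edgeset K2)
     F (dunion (subg K1) (subg K2), dunion (contr K1) (contr K2)).
Proof.
move=> FR vG vH; rewrite pair_big /=.
rewrite (reindex (fun p : {set 'I_(nh G)} * {set 'I_(nh H)} => Uset p.1 p.2)) /=; last first.
  exists (fun K : {set 'I_(nh (dunion G H))} =>
            ([set x | lshift _ x \in K], [set y | rshift _ y \in K])) => [[K1 K2]|K] _ /=.
    by congr pair; apply/setP => x; rewrite inE ?inUL ?inUR.
  by apply/setP; elim/ord_case => x; rewrite ?inUL ?inUR inE.
apply: eq_big => [p|p]; first by rewrite edgesetU.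
rewrite edgesetU => /andP [e1 e2]; apply: FR => /=.
  by apply/iso2P; exact: du_subg.
by apply/iso2P; exact: du_contrP.
Qed.

Lemma eq_bigr_Allp (X : Type) (P : X -> Prop) (s : seq X) (F1 F2 : X -> rat) :
  Allp P s -> (forall x, P x -> F1 x = F2 x) ->
  \sum_(x <- s) F1 x = \sum_(x <- s) F2 x.
Proof.
move=> Hs H; elim: s Hs => [|x s IH] /=; first by rewrite !big_nil.
by case=> Hx Hs; rewrite !big_cons H // IH.
Qed.

Definition tmul (X Y : vec2) : vec2 :=
  [seq (x.1 * y.1, (dunion x.2.1 y.2.1, dunion x.2.2 y.2.2)) | x <- X, y <- Y].

Lemma tmul_sum X Y F : \sum_(z <- tmul X Y) z.1 * F z.2 =
  \sum_(x <- X) \sum_(y <- Y) x.1 * y.1 * F (dunion x.2.1 y.2.1, dunion x.2.2 y.2.2).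
Proof. by rewrite /tmul big_allpairs_dep. Qed.

Lemma vmul_sum u v F : \sum_(z <- vmul u v) z.1 * F z.2 =
  \sum_(p <- u) \sum_(q <- v) p.1 * q.1 * F (dunion p.2 q.2).
Proof. by rewrite /vmul big_allpairs_dep. Qed.

Lemma Delta_vmul u v : valid_vec u -> valid_vec v ->
  veq2 (Delta (vmul u v)) (tmul (Delta u) (Delta v)).
Proof.
move=> vu vv a b; rewrite !coef2E Delta_sum tmul_sum.
rewrite (vmul_sum u v (fun g => \sum_(q <- cop1 g) q.1 * ind2 a b q.2)).
pose Fu := fun x2 : graph2 * graph2 => \sum_(y <- Delta v)
      y.1 * ind2 a b (dunion x2.1 y.2.1, dunion x2.2 y.2.2).
have -> : \sum_(x <- Delta u) \sum_(y <- Delta v)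
      x.1 * y.1 * ind2 a b (dunion x.2.1 y.2.1, dunion x.2.2 y.2.2) =
    \sum_(x <- Delta u) x.1 * Fu x.2.
  by apply: eq_bigr => x _; rewrite mulr_sumr; apply: eq_bigr => y _; rewrite mulrA.
rewrite (Delta_sum u Fu).
apply: (eq_bigr_Allp (valid_Allp vu)) => p vp.
rewrite (cop1_sum p.2 Fu) /Fu /=.
have -> : \sum_(K1 : {set 'I_(nh p.2)} | edgeset K1) \sum_(y <- Delta v)
      y.1 * ind2 a b (dunion (subg K1) y.2.1, dunion (contr K1) y.2.2) =
    \sum_(K1 : {set 'I_(nh p.2)} | edgeset K1) \sum_(q <- v) q.1 *
      \sum_(K2 : {set 'I_(nh q.2)} | edgeset K2)
        ind2 a b (dunion (subg K1) (subg K2), dunion (contr K1) (contr K2)).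
  apply: eq_bigr => K1 _.
  rewrite (Delta_sum v (fun y2 => ind2 a b (dunion (subg K1) y2.1, dunion (contr K1) y2.2))).
  by apply: eq_bigr => q _;
    rewrite (cop1_sum q.2 (fun r2 => ind2 a b (dunion (subg K1) r2.1, dunion (contr K1) r2.2))).
rewrite exchange_big mulr_sumr /=.
apply: (eq_bigr_Allp (valid_Allp vv)) => q vq.
rewrite (cop1_sum (dunion p.2 q.2) (ind2 a b)) (cop1_du (ind2_iso a b)) //.
by rewrite -mulrA mulr_sumr.
Qed.

Definition R2 (x y : graph2 * graph2) := iso2 x.1 y.1 && iso2 x.2 y.2.
Lemma R2_refl x : R2 x x. Proof. by rewrite /R2 !iso2_refl. Qed.
Lemma R2_sym x y : R2 x y = R2 y x. Proof. by rewrite /R2 iso2_sym [iso2 x.2 _]iso2_sym. Qed.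
Lemma R2_trans x y z : R2 x y -> R2 y z -> R2 x z.
Proof.
by case/andP => a b /andP [c d]; apply/andP; split; [apply: iso2_trans a c | apply: iso2_trans b d].
Qed.

Lemma Allp_T X (s : seq X) : Allp (fun _ => True) s.
Proof. by elim: s. Qed.

Lemma tmul_veqL X X' Y : veq2 X X' -> veq2 (tmul X Y) (tmul X' Y).
Proof.
move=> e a b; rewrite !coef2E !tmul_sum.
pose Fy := fun x2 : graph2 * graph2 => \sum_(y <- Y)
      y.1 * ind2 a b (dunion x2.1 y.2.1, dunion x2.2 y.2.2).
have E Z : \sum_(x <- Z) \sum_(y <- Y)
      x.1 * y.1 * ind2 a b (dunion x.2.1 y.2.1, dunion x.2.2 y.2.2) =
    \sum_(x <- Z) x.1 * Fy x.2.
  by apply: eq_bigr => x _; rewrite mulr_sumr; apply: eq_bigr => y _; rewrite mulrA.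
rewrite !E; apply: (@sum_inv _ R2 R2_refl R2_sym R2_trans (fun _ => True) Fy).
- move=> x y _ _ /andP [h1 h2]; apply: eq_bigr => z _; congr (_ * _).
  by apply: ind2_iso; apply: du_iso; rewrite ?iso2_refl.
- exact: Allp_T.
- exact: Allp_T.
- by move=> x; exact: e.
Qed.

Lemma tmul_veqR X Y Y' : veq2 Y Y' -> veq2 (tmul X Y) (tmul X Y').
Proof.
move=> e a b; rewrite !coef2E !tmul_sum.
pose Fx := fun y2 : graph2 * graph2 => \sum_(x <- X)
      x.1 * ind2 a b (dunion x.2.1 y2.1, dunion x.2.2 y2.2).
have E Z : \sum_(x <- X) \sum_(y <- Z)
      x.1 * y.1 * ind2 a b (dunion x.2.1 y.2.1, dunion x.2.2 y.2.2) =
    \sum_(y <- Z) y.1 * Fx y.2.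
  rewrite exchange_big; apply: eq_bigr => y _; rewrite mulr_sumr.
  by apply: eq_bigr => x _; rewrite mulrA [y.1 * _]mulrC.
rewrite !E; apply: (@sum_inv _ R2 R2_refl R2_sym R2_trans (fun _ => True) Fx).
- move=> x y _ _ /andP [h1 h2]; apply: eq_bigr => z _; congr (_ * _).
  by apply: ind2_iso; apply: du_iso; rewrite ?iso2_refl.
- exact: Allp_T.
- exact: Allp_T.
- by move=> x; exact: e.
Qed.

Definition Phi (F : graph2 * graph2 -> rat) (X : vec2) := \sum_(z <- X) z.1 * F z.2.

Lemma Phi_tmul F X Y : Phi F (tmul X Y) =
  Phi (fun x2 => \sum_(y <- Y) y.1 * F (dunion x2.1 y.2.1, dunion x2.2 y.2.2)) X.
Proof.
rewrite /Phi tmul_sum; apply: eq_bigr => x _; rewrite mulr_sumr.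
by apply: eq_bigr => y _; rewrite mulrA.
Qed.

Lemma Phi_tmulR F X Y : Phi F (tmul X Y) =
  Phi (fun y2 => \sum_(x <- X) x.1 * F (dunion x.2.1 y2.1, dunion x.2.2 y2.2)) Y.
Proof.
rewrite /Phi tmul_sum exchange_big; apply: eq_bigr => y _; rewrite mulr_sumr.
by apply: eq_bigr => x _; rewrite mulrA [y.1 * _]mulrC.
Qed.

Lemma Phi_flat (T : Type) F (s : seq T) (c : T -> rat) (L : T -> vec2) :
  Phi F (flatten [seq [seq (c x * q.1, q.2) | q <- L x] | x <- s]) =
  \sum_(x <- s) c x * Phi F (L x).
Proof. exact: flat_sum. Qed.

Lemma Phi_tmul_flatL (T : Type) F (s : seq T) (c : T -> rat) (L : T -> vec2) Y :
  Phi F (tmul (flatten [seq [seq (c x * q.1, q.2) | q <- L x] | x <- s]) Y) =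
  \sum_(x <- s) c x * Phi F (tmul (L x) Y).
Proof.
rewrite Phi_tmul Phi_flat; apply: eq_bigr => x _; by rewrite Phi_tmul.
Qed.

Lemma Phi_tmul_flatR (T : Type) F (s : seq T) (c : T -> rat) (L : T -> vec2) X :
  Phi F (tmul X (flatten [seq [seq (c x * q.1, q.2) | q <- L x] | x <- s])) =
  \sum_(x <- s) c x * Phi F (tmul X (L x)).
Proof.
rewrite Phi_tmulR Phi_flat; apply: eq_bigr => x _; by rewrite Phi_tmulR.
Qed.

Lemma Phi_tens_tens F a1 a2 b1 b2 :
  Phi F (tmul (tens a1 a2) (tens b1 b2)) = Phi F (tens (vmul a1 b1) (vmul a2 b2)).
Proof.
rewrite /Phi tmul_sum {1}/tens big_allpairs_dep.
under eq_bigr => al _ do under eq_bigr => be _ do rewrite /tens big_allpairs_dep.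
rewrite /tens /vmul big_allpairs_dep big_allpairs_dep.
under [RHS]eq_bigr => al _ do under eq_bigr => al' _ do rewrite big_allpairs_dep.
apply: eq_bigr => al _ /=.
rewrite [LHS]exchange_big /=; apply: eq_bigr => al' _.
apply: eq_bigr => be _; apply: eq_bigr => be' _ /=.
rewrite !mulrA; congr (_ * _).
rewrite -!mulrA; congr (_ * _); rewrite mulrC -!mulrA; congr (_ * _); exact: mulrC.
Qed.

Definition abmul (ab cd : seq (rat * (vec * vec))) : seq (rat * (vec * vec)) :=
  [seq (p.1 * q.1, (vmul p.2.1 q.2.1, vmul p.2.2 q.2.2)) | p <- ab, q <- cd].

Lemma TT_mul ab cd : veq2 (tmul (TT ab) (TT cd)) (TT (abmul ab cd)).
Proof.
move=> a b; rewrite !coef2E.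
change (Phi (ind2 a b) (tmul (TT ab) (TT cd)) = Phi (ind2 a b) (TT (abmul ab cd))).
rewrite /TT Phi_tmul_flatL Phi_flat /abmul big_allpairs_dep /=.
apply: eq_bigr => p _; rewrite Phi_tmul_flatR mulr_sumr.
apply: eq_bigr => q _ /=; rewrite Phi_tens_tens.
by rewrite mulrA.
Qed.

Local Notation vbasis := Defs.vbasis.
Local Notation coef := Defs.coef.

Lemma valid_empty2 : valid2 empty2.
Proof. by apply: validI; case. Qed.

Lemma valid_cat u v : valid_vec u -> valid_vec v -> valid_vec (u ++ v).
Proof. by rewrite /valid_vec all_cat => -> ->. Qed.

Lemma valid_scale c u : valid_vec u -> valid_vec (vscale c u).
Proof. by rewrite /valid_vec /vscale all_map. Qed.

Lemma valid_mul u v : valid_vec u -> valid_vec v -> valid_vec (vmul u v).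
Proof.
elim: u => //= p u IH /andP [vp vu] vv.
rewrite /vmul allpairs_cons; apply: valid_cat; last exact: IH.
rewrite /valid_vec all_map; apply: sub_all vv => q /= vq.
exact: dunion_valid.
Qed.

Lemma veq_basis g g' : iso2 g g' -> veq (vbasis g) (vbasis g').
Proof.
move=> i h; rewrite /coef !big_cons !big_nil /=.
have -> : iso2 g h = iso2 g' h.
  apply/idP/idP => H; last exact: iso2_trans i H.
  by apply: iso2_trans _ H; rewrite iso2_sym.
by [].
Qed.

Section Main.
Variable V : graph1 -> Prop.
Local Notation S := (G2bar V).
Local Notation A := (gen_subalg S).

Lemma A_valid u : A u -> valid_vec u.
Proof. by case. Qed.

Lemma A_veq u v : A u -> valid_vec v -> veq u v -> A v.
Proof.
move=> [vu Hu] vv e; split => // P HP HS.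
have [_ [Hveq _]] := HP; exact: Hveq (Hu P HP HS) vv e.
Qed.

Lemma A_zero : A vzero.
Proof. by split => // P [_ [_ [H _]]]. Qed.

Lemma A_unit : A vunit.
Proof. by split; [rewrite /valid_vec /= valid_empty2 | move=> P [_ [_ [_ [H _]]]]]. Qed.

Lemma A_add u v : A u -> A v -> A (vadd u v).
Proof.
move=> [vu Hu] [vv Hv]; split; first exact: valid_cat.
move=> P HP HS; have [_ [_ [_ [_ [H _]]]]] := HP; apply: H; [exact: Hu | exact: Hv].
Qed.

Lemma A_scale c u : A u -> A (vscale c u).
Proof.
move=> [vu Hu]; split; first exact: valid_scale.
move=> P HP HS; have [_ [_ [_ [_ [_ [H _]]]]]] := HP; apply: H; exact: Hu.
Qed.

Lemma A_mul u v : A u -> A v -> A (vmul u v).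
Proof.
move=> [vu Hu] [vv Hv]; split; first exact: valid_mul.
move=> P HP HS; have [_ [_ [_ [_ [_ [_ H]]]]]] := HP; apply: H; [exact: Hu | exact: Hv].
Qed.

Lemma A_basis g : valid2 g -> S g -> A (vbasis g).
Proof.
move=> vg Sg; split; first by rewrite /valid_vec /= vg.
by move=> P HP HS; apply: HS.
Qed.

Lemma A_sub : is_subalgebra A.
Proof.
split; first exact: A_valid.
split; first exact: A_veq.
split; first exact: A_zero.
split; first exact: A_unit.
split; first exact: A_add.
split; first exact: A_scale.
exact: A_mul.
Qed.

Lemma veq2_trans t1 t2 t3 : veq2 t1 t2 -> veq2 t2 t3 -> veq2 t1 t3.
Proof. by move=> e1 e2 a b; rewrite e1 e2. Qed.
Lemma veq2_sym t1 t2 : veq2 t1 t2 -> veq2 t2 t1.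
Proof. by move=> e a b; rewrite e. Qed.

Lemma in_tensor_veq t t' : veq2 t t' -> in_tensor A t' -> in_tensor A t.
Proof. by move=> e [ab [Hab He]]; exists ab; split => //; exact: veq2_trans e He. Qed.

Lemma in_tensor_basis g :
  (forall K : {set 'I_(nh g)}, edgeset K -> A (vbasis (subg K)) /\ A (vbasis (contr K))) ->
  in_tensor A (Delta (vbasis g)).
Proof.
move=> HK.
exists [seq (1, (vbasis (subg K), vbasis (contr K))) | K <- enum [set K : {set 'I_(nh g)} | edgeset K]].
split.
  apply: Allp_map; apply: Allp_in => K; rewrite mem_enum inE => eK /=; exact: HK.
move=> a b; rewrite !coef2E Delta_sum.
change (\sum_(p <- vbasis g) p.1 * \sum_(q <- cop1 p.2) q.1 * ind2 a b q.2 =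
  \sum_(p <- TT [seq (1, (vbasis (subg K), vbasis (contr K))) |
      K <- enum [set K : {set 'I_(nh g)} | edgeset K]]) p.1 * ind2 a b p.2).
rewrite TT_sum big_map big_cons big_nil addr0 mul1r cop1_sum big_enum /=.
apply: eq_big => [K|K _]; first by rewrite inE.
by rewrite mul1r tens_sum !big_cons !big_nil !addr0 /= !mul1r.
Qed.

End Main.

Lemma iso_empty G : nv G = 0%N -> nh G = 0%N -> ns G = 0%N -> iso2 G empty2.
Proof.
move=> eV eH eS; apply/iso2P; constructor.
have EV (x : 'I_(nv G)) : False by have := ltn_ord x; move: (nat_of_ord x); rewrite eV.
have EH (x : 'I_(nh G)) : False by have := ltn_ord x; move: (nat_of_ord x); rewrite eH.
have ES (x : 'I_(ns G)) : False by have := ltn_ord x; move: (nat_of_ord x); rewrite eS.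
apply: (@IsoM G empty2 (cast_ord eV) (cast_ord eH) (cast_ord eS)).
- by exists (cast_ord (esym eV)); [move=> x; case: (EV x) | case].
- by exists (cast_ord (esym eH)); [move=> x; case: (EH x) | case].
- by exists (cast_ord (esym eS)); [move=> x; case: (ES x) | case].
- by move=> x; case: (EH x).
- by move=> x; case: (EH x).
- by move=> x; case: (ES x).
- by move=> x; case: (ES x).
- by move=> x; case: (ES x).
Qed.

Lemma card0_set (T : finType) (A : {set T}) : #|T| = 0%N -> #|A| = 0%N.
Proof. by move=> e; apply/eqP; rewrite -leqn0 -e max_card. Qed.

Lemma Delta_cat u v : Delta (u ++ v) = Delta u ++ Delta v.
Proof. by rewrite /Delta map_cat flatten_cat. Qed.

Lemma TT_cat ab cd : TT (ab ++ cd) = TT ab ++ TT cd.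
Proof. by rewrite /TT map_cat flatten_cat. Qed.

Lemma coef2_cat t t' a b : coef2 (t ++ t') a b = coef2 t a b + coef2 t' a b.
Proof. by rewrite /coef2 big_cat. Qed.

Section Main2.
Variable V : graph1 -> Prop.
Local Notation S := (G2bar V).
Local Notation A := (gen_subalg S).

Definition Q (v : vec) := A v /\ in_tensor A (Delta v).

Lemma Q_sub : is_subalgebra Q.
Proof.
split; first by move=> u [[]].
split.
  move=> u v [Au Tu] vv e; split; first exact: A_veq Au vv e.
  apply: in_tensor_veq Tu; apply: Delta_veq => //; first exact: (A_valid Au).
split.
  split; first exact: A_zero.
  by exists [::]; split => // a b.
split.
  split; first exact: A_unit.
  apply: in_tensor_basis => K eK.
  have vE : forall x, iso2 empty2 x -> A (vbasis x).
    move=> x ix; apply: (A_veq (A_unit V)); last exact: veq_basis.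
    by rewrite /valid_vec /= (iso2_valid ix valid_empty2).
  split; apply: vE; rewrite iso2_sym; apply: iso_empty => //=.
  + by apply: card0_set; rewrite card_ord.
  + by apply: card0_set; rewrite card_ord.
  + by apply: card0_set; rewrite card_ord.
split.
  move=> u v [Au [ab [Hab Hu]]] [Av [cd [Hcd Hv]]]; split; first exact: A_add.
  exists (ab ++ cd); split; first exact: Allp_cat.
  by move=> a b; rewrite /vadd Delta_cat coef2_cat Hu Hv -coef2_cat -TT_cat.
split.
  move=> c u [Au [ab [Hab Hu]]]; split; first exact: A_scale.
  exists [seq (c * p.1, p.2) | p <- ab]; split.
    by apply: Allp_map.
  move=> a b; have := Hu a b; rewrite !coef2E Delta_sum TT_sum => E.
  rewrite Delta_sum TT_sum /vscale !big_map /=.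
  under eq_bigr do rewrite -mulrA.
  under [RHS]eq_bigr do rewrite -mulrA.
  by rewrite -!mulr_sumr E.
move=> u v [Au Tu] [Av Tv]; split; first exact: A_mul.
case: Tu => ab [Hab Hu]; case: Tv => cd [Hcd Hv].
exists (abmul ab cd); split.
  apply: Allp_allpairs; apply: Allp_impl Hab => p [Ap1 Ap2].
  by apply: Allp_impl Hcd => q [Aq1 Aq2] /=; split; apply: A_mul.
apply: veq2_trans (Delta_vmul (A_valid Au) (A_valid Av)) _.
apply: veq2_trans (tmul_veqL _ Hu) _.
apply: veq2_trans (tmul_veqR _ Hv) _.
exact: TT_mul.
Qed.
End Main2.

Section Main3.
Variable V : graph1 -> Prop.
Local Notation S := (G2bar V).
Local Notation A := (gen_subalg S).

Lemma Q_basis g : valid2 g -> S g -> Q V (vbasis g).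
Proof.
move=> vg Sg; split; first exact: A_basis.
case: Sg => G' [K0 [iG' [eK0 iso]]].
have vG' : valid2 G' by case: iG'.
pose X := contr_isContr vG' eK0.
have vC : valid2 (contr K0) := contr_valid vG' eK0 X.
apply: (@in_tensor_veq V _ (Delta (vbasis (contr K0)))).
  apply: Delta_veq; rewrite /valid_vec /= ?vg ?vC //.
  by apply: veq_basis; rewrite iso2_sym.
apply: in_tensor_basis => K' eK'.
have eM : edgeset (Mset X K') := comp_edgeset eK0 X eK'.
split.
  apply: A_basis; first exact: subg_valid.
  exists (subg (Mset X K')), K0; split; first exact: inG2_subg.
  split; first exact: (subg_edgeset eK0 (KM X K')).
  apply/iso2P.
  apply: contr_uniq (contr_isContr (subg_valid vG' eM) (subg_edgeset eK0 (KM X K'))) _.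
  exact: subg_isContr.
apply: A_basis; first exact: (contr_valid vC eK' (contr_isContr vC eK')).
exists G', (Mset X K'); split => //; split => //.
apply/iso2P; apply: contr_uniq (contr_isContr vG' eM) _.
exact: (comp_isContr vG' eK0 X eK' (contr_isContr vC eK')).
Qed.
End Main3.

Theorem mainTheorem4 (V : graph1 -> Prop) :
  is_subbialgebra (gen_subalg (G2bar V)).
Proof.
split; first exact: A_sub.
move=> v [vv Hv].
have := Hv (Q V) (Q_sub V) (@Q_basis V).
by case.
Qed.
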